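(* If $\sigma : S \to A^\perp \parallel B$ and $\tau : T \to B^\perp \parallel C$ are backward sequential strategies (with $A, B, C$ arenas), so is $\tau \odot \sigma$.
   Context: $e \rightarrow e'$ denotes immediate causal dependency ($e<e'$ with nothing strictly between). A strategy $\sigma:S\to A$ (between event structures with polarities) is a map of esps which is courteous (if $s_1 \rightarrow s_2$ with $\mathrm{pol}(s_1)=+$ or $\mathrm{pol}(s_2)=-$ then $\sigma s_1 \rightarrow \sigma s_2$) and receptive (for every configuration $x$ of $S$, if $\sigma x$ extends by a negative event $a$ to a configuration, there is a unique $s$ with $x\cup\{s\}$ a configuration and $\sigma s=a$). An arena is a countable esp which is a forest, conflict-free and alternating. $S$ is backward sequential if for every $s\in S$ the set $[s]=\{s'\mid s'\le s\}$ is totally ordered. The composition $\tau\odot\sigma$ is obtained by taking the pullback $(S\parallel C)\circledast(A\parallel T)$ of $\sigma\parallel C$ and $A\parallel\tau$ and projecting onto the events not mapped to $B$. *)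

(* Defs.v *)
From Stdlib Require Import List Relations.
Set Implicit Arguments.

(* Raw data of an event structure with polarities (true = +, false = -).
   Consistency is a predicate on (finite) sets of events. The axioms are
   the separate predicate [isES]. *)
Record esp := ESP {
  ev :> Type;
  leq : ev -> ev -> Prop;
  con : (ev -> Prop) -> Prop;
  pol : ev -> bool }.
Arguments leq {e} _ _.
Arguments con {e} _.
Arguments pol {e} _.

Definition finite {T : Type} (X : T -> Prop) : Prop :=
  exists l : list T, forall x, X x -> In x l.

Definition ltE {E : esp} (e e' : E) : Prop := leq e e' /\ e <> e'.

Definition imm {E : esp} (e e' : E) : Prop :=
  ltE e e' /\ ~ (exists d, ltE e d /\ ltE d e').

Definition isES (E : esp) : Prop :=
  (forall e : E, leq e e) /\
  (forall e1 e2 e3 : E, leq e1 e2 -> leq e2 e3 -> leq e1 e3) /\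
  (forall e1 e2 : E, leq e1 e2 -> leq e2 e1 -> e1 = e2) /\
  (forall e : E, finite (fun d => leq d e)) /\
  (forall X : E -> Prop, con X -> finite X) /\
  (forall e : E, con (fun d => d = e)) /\
  (forall X Y : E -> Prop, con Y -> (forall e, X e -> Y e) -> con X) /\
  (forall (X : E -> Prop) (e e' : E), con X -> X e -> leq e' e ->
       con (fun d => X d \/ d = e')).

Definition conf (E : esp) (x : E -> Prop) : Prop :=
  finite x /\ (forall e e' : E, x e -> leq e' e -> x e') /\ con x.

Definition image {X Y : Type} (h : X -> Y) (x : X -> Prop) : Y -> Prop :=
  fun y => exists a, x a /\ h a = y.

Definition dual (E : esp) : esp :=
  ESP (@leq E) (@con E) (fun e => negb (pol e)).

Definition par (E F : esp) : esp :=
  ESP (fun u v : ev E + ev F => match u, v with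
                   | inl a, inl b => leq a b
                   | inr a, inr b => leq a b
                   | _, _ => False end)
      (fun X => con (fun a : E => X (inl a)) /\ con (fun b : F => X (inr b)))
      (fun u => match u with inl a => pol a | inr b => pol b end).

Definition isMap {E F : esp} (h : E -> F) : Prop :=
  (forall e, pol (h e) = pol e) /\
  (forall x, conf E x -> conf F (image h x)) /\
  (forall x, conf E x -> forall e e', x e -> x e' -> h e = h e' -> e = e').

Definition courteous {E F : esp} (h : E -> F) : Prop :=
  forall s1 s2 : E, imm s1 s2 -> (pol s1 = true \/ pol s2 = false) ->
    imm (h s1) (h s2).

Definition receptive {E F : esp} (h : E -> F) : Prop :=
  forall x, conf E x -> forall a : F,
    pol a = false -> ~ image h x a -> conf F (fun b => image h x b \/ b = a) ->
    exists s, (conf E (fun e => x e \/ e = s) /\ h s = a) /\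
      forall s', conf E (fun e => x e \/ e = s') -> h s' = a -> s' = s.

Definition isStrategy {E F : esp} (h : E -> F) : Prop :=
  isES E /\ isES F /\ isMap h /\ courteous h /\ receptive h.

Definition backSeq (E : esp) : Prop :=
  forall s s1 s2 : E, leq s1 s -> leq s2 s -> leq s1 s2 \/ leq s2 s1.

Definition isArena (A : esp) : Prop :=
  isES A /\
  (exists c : A -> nat, forall a a', c a = c a' -> a = a') /\
  (forall a a1 a2 : A, leq a1 a -> leq a2 a -> leq a1 a2 \/ leq a2 a1) /\
  (forall X : A -> Prop, finite X -> con X) /\
  (forall a a' : A, imm a a' -> pol a <> pol a').

(* Pullback of (total) maps of event structures f : E -> G, g : F -> G,
   via prime secured bijections. Only the underlying functions into the
   carrier G matter. Polarity of the pullback is irrelevant (dummy). *)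
Section Pullback.
Variables (E F : esp) (G : Type) (f : E -> G) (g : F -> G).

Definition pbRel (th : E * F -> Prop) (p q : E * F) : Prop :=
  th p /\ th q /\ (ltE (fst p) (fst q) \/ ltE (snd p) (snd q)).

Definition securedBij (th : E * F -> Prop) : Prop :=
  finite th /\
  (forall p, th p -> f (fst p) = g (snd p)) /\
  conf E (fun e => exists e', th (e, e')) /\
  conf F (fun e' => exists e, th (e, e')) /\
  (forall e e1 e2, th (e, e1) -> th (e, e2) -> e1 = e2) /\
  (forall e1 e2 e', th (e1, e') -> th (e2, e') -> e1 = e2) /\
  (forall p, ~ clos_trans _ (pbRel th) p p).

Record pbEv := PbEv {
  pb_bij : E * F -> Prop;
  pb_top : E * F;
  pb_sec : securedBij pb_bij;
  pb_in : pb_bij pb_top;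
  pb_prime : forall q, pb_bij q -> clos_refl_trans _ (pbRel pb_bij) q pb_top }.

Definition pullback : esp :=
  @ESP pbEv
    (fun e e' => forall p, pb_bij e p -> pb_bij e' p)
    (fun X => finite X /\ securedBij (fun p => exists e, X e /\ pb_bij e p))
    (fun _ => true).
End Pullback.

Section Composition.
Variables (A B C S T : esp) (sigma : S -> par (dual A) B) (tau : T -> par (dual B) C).

(* sigma || C  and  A || tau, into the common carrier (A + B) + C *)
Definition sigmaC (u : par S C) : (ev A + ev B) + ev C :=
  match u with inl s => inl (sigma s) | inr c => inr c end.

Definition Atau (v : par A T) : (ev A + ev B) + ev C :=
  match v with
  | inl a => inl (inl a)
  | inr t => match tau t with inl b => inl (inr b) | inr c => inr c end
  end.

Definition interaction : esp := @pullback (par S C) (par A T) _ sigmaC Atau.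

Definition hideB (w : (ev A + ev B) + ev C) : option (ev A + ev C) :=
  match w with
  | inl (inl a) => Some (inl a)
  | inl (inr _) => None
  | inr c => Some (inr c)
  end.

(* visible events: those not mapped to B *)
Record compEv := CompEv {
  ce_ev : interaction;
  ce_img : ev A + ev C;
  ce_vis : hideB (sigmaC (fst (pb_top ce_ev))) = Some ce_img }.

Definition compESP : esp :=
  @ESP compEv
    (fun x y => leq (ce_ev x) (ce_ev y))
    (fun X => @con interaction (fun e => exists x, X x /\ ce_ev x = e))
    (fun x => @pol (par (dual A) C) (ce_img x)).

Definition compMap : compESP -> par (dual A) C := fun x => ce_img x.
End Composition.

Arguments compESP {A B C S T} sigma tau.
Arguments compMap {A B C S T} sigma tau _.

(* Main.v *)
Require Import Defs.
From Stdlib Require Import List Relations Classical ClassicalEpsilon FunctionalExtensionality PropExtensionality ProofIrrelevance Wellfounded Lia.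


Lemma pred_ext {X : Type} (P Q : X -> Prop) : (forall x, P x <-> Q x) -> P = Q.
Proof. intro H; apply functional_extensionality; intro x; apply propositional_extensionality; auto. Qed.

Lemma finite_sub {X : Type} (P Q : X -> Prop) : finite Q -> (forall x, P x -> Q x) -> finite P.
Proof. intros [l Hl] H; exists l; auto. Qed.

Lemma finite_add {X : Type} (P : X -> Prop) (a : X) : finite P -> finite (fun x => P x \/ x = a).
Proof. intros [l Hl]; exists (a :: l); intros x [H|H]; simpl; subst; auto. Qed.

Lemma finite_union {X : Type} (P Q : X -> Prop) : finite P -> finite Q -> finite (fun x => P x \/ Q x).
Proof. intros [l Hl] [m Hm]; exists (l ++ m); intros x [H|H]; apply in_or_app; auto. Qed.

Lemma finite_image {X Y : Type} (g : X -> Y) (P : X -> Prop) : finite P -> finite (image g P).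
Proof. intros [l Hl]; exists (map g l); intros y [x [Hx <-]]; apply in_map; auto. Qed.

Lemma finite_inj_aux {X Y : Type} (g : X -> Y) (l : list Y) : forall (P : X -> Prop),
  (forall x, P x -> In (g x) l) -> (forall x y, P x -> P y -> g x = g y -> x = y) -> finite P.
Proof.
  induction l as [|h l IH]; intros P H1 H2.
  - exists nil; intros x Hx; destruct (H1 x Hx).
  - destruct (classic (exists x, P x /\ g x = h)) as [[x0 [Hx0 Hg]]|Hn].
    + destruct (IH (fun x => P x /\ g x <> h)) as [m Hm].
      * intros x [Hx Hne]; destruct (H1 x Hx); [congruence|auto].
      * intros x y [Hx _] [Hy _]; auto.
      * exists (x0 :: m); intros x Hx; destruct (classic (g x = h)).
        -- left; apply H2; auto; congruence.
        -- right; apply Hm; auto.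
    + apply IH; auto. intros x Hx; destruct (H1 x Hx); auto; exfalso; apply Hn; eauto.
Qed.

Lemma finite_inj {X Y : Type} (g : X -> Y) (P : X -> Prop) (Q : Y -> Prop) :
  finite Q -> (forall x, P x -> Q (g x)) -> (forall x y, P x -> P y -> g x = g y -> x = y) -> finite P.
Proof. intros [l Hl] H1 H2; apply (finite_inj_aux g l); auto. Qed.

Lemma max_exists {X : Type} (R : X -> X -> Prop)
  (Rtr : forall x y z, R x y -> R y z -> R x z)
  (Ran : forall x y, R x y -> R y x -> x = y) (l : list X) :
  forall P : X -> Prop, (forall x, P x -> In x l) -> (exists x, P x) ->
  exists m, P m /\ forall y, P y -> R m y -> y = m.
Proof.
  induction l as [|h l IH]; intros P H1 [x0 Hx0].
  - destruct (H1 x0 Hx0).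
  - destruct (classic (exists x, P x /\ x <> h)) as [Hex|Hn].
    + destruct (IH (fun x => P x /\ x <> h)) as [m [[Hm Hmh] Hmax]]; auto.
      { intros x [Hx Hne]; destruct (H1 x Hx); [congruence|auto]. }
      destruct (classic (P h /\ R m h)) as [[Ph Rmh]|Hno].
      * exists h; split; auto. intros y Py Rhy.
        destruct (classic (y = h)) as [|Hyh]; auto.
        assert (y = m) by (apply Hmax; [split; auto| eapply Rtr; eauto]). subst y.
        apply Ran; auto.
      * exists m; split; auto. intros y Py Rmy.
        destruct (classic (y = h)) as [->|Hyh].
        -- exfalso; apply Hno; auto.
        -- apply Hmax; auto.
    + exists x0; split; auto. intros y Py _.
      assert (x0 = h) by (apply NNPP; intro; apply Hn; eauto).
      assert (y = h) by (apply NNPP; intro; apply Hn; eauto). congruence.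
Qed.

(* well-foundedness of finite acyclic relations *)
Lemma filter_le {X : Type} (f g : X -> bool) (l : list X) :
  (forall x, f x = true -> g x = true) -> length (filter f l) <= length (filter g l).
Proof.
  intro H; induction l as [|h l IH]; simpl; auto.
  destruct (f h) eqn:E1; destruct (g h) eqn:E2; simpl; try lia.
  rewrite (H h E1) in E2; discriminate.
Qed.

Lemma filter_lt {X : Type} (f g : X -> bool) (l : list X) (a : X) :
  (forall x, f x = true -> g x = true) -> In a l -> f a = false -> g a = true ->
  length (filter f l) < length (filter g l).
Proof.
  intros H Ha Hf Hg; induction l as [|h l IH]; simpl in *; [contradiction|].
  destruct Ha as [<-|Ha].
  - rewrite Hf, Hg; simpl. pose proof (filter_le f g l H); lia.
  - destruct (f h) eqn:E1; destruct (g h) eqn:E2; simpl; try (specialize (IH Ha); lia).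
    rewrite (H h E1) in E2; discriminate.
Qed.

Definition decb (P : Prop) : bool := if excluded_middle_informative P then true else false.
Lemma decb_true (P : Prop) : decb P = true <-> P.
Proof. unfold decb; destruct (excluded_middle_informative P); split; intros; auto; discriminate. Qed.

Lemma wf_finite {X : Type} (R : X -> X -> Prop) (l : list X) :
  (forall x y, R x y -> In x l) -> (forall x, ~ clos_trans X R x x) ->
  well_founded (clos_trans X R).
Proof.
  intros Hl Hac.
  apply wf_clos_trans.
  set (m := fun y => length (filter (fun x => decb (clos_trans X R x y)) l)).
  apply (wf_incl _ _ (fun x y => m x < m y)).
  - intros x y Hxy. unfold m. apply filter_lt with (a := x).
    + intros z Hz; cbv beta in *; rewrite decb_true in *; eapply t_trans; [exact Hz|apply t_step; exact Hxy].
    + eapply Hl; eauto.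
    + cbv beta. destruct (decb (clos_trans X R x x)) eqn:E; auto. apply (proj1 (decb_true _)) in E; exfalso; eapply Hac; eauto.
    + cbv beta; apply decb_true; apply t_step; auto.
  - apply (wf_inverse_image _ _ lt m); apply Wf_nat.lt_wf.
Qed.

Lemma t_rt_t {X : Type} (R : X -> X -> Prop) a b c :
  clos_trans X R a b -> clos_refl_trans X R b c -> clos_trans X R a c.
Proof.
  intros H1 H2; induction H2; auto. eapply t_trans; eauto; apply t_step; auto.
Qed.

Lemma rt_t_cycle {X : Type} (R : X -> X -> Prop) a b :
  clos_refl_trans X R a b -> clos_refl_trans X R b a -> a <> b -> clos_trans X R a a.
Proof.
  intros H1 H2 Hne.
  apply clos_rt_t with b; auto.
  apply clos_rt_rt1n in H2; destruct H2 as [|y z Hy Hz]; [congruence|].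
  apply clos_rt1n_rt in Hz. apply t_rt_t with y; auto. apply t_step; auto.
Qed.

Lemma rt_split {X : Type} (R : X -> X -> Prop) a b :
  clos_refl_trans X R a b -> a = b \/ exists c, clos_refl_trans X R a c /\ R c b.
Proof.
  intro H; apply clos_rt_rtn1 in H; destruct H as [|y z Hy Hz]; auto.
  right; exists y; split; auto; apply clos_rtn1_rt; auto.
Qed.

Lemma t_rt {X : Type} (R : X -> X -> Prop) a b : clos_trans X R a b -> clos_refl_trans X R a b.
Proof. induction 1; [apply rt_step|eapply rt_trans]; eauto. Qed.

Lemma t_split {X : Type} (R : X -> X -> Prop) a b :
  clos_trans X R a b -> exists c, clos_refl_trans X R a c /\ R c b.
Proof.
  intro H; apply clos_trans_tn1 in H; destruct H as [|y z Hy Hz].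
  - exists a; split; auto; apply rt_refl.
  - exists y; split; auto. apply t_rt; apply clos_tn1_trans; auto.
Qed.

Section ESlemmas.
Context (E : esp) (HE : isES E).

Lemma es_refl (e : E) : leq e e. Proof. destruct HE as (h1&h2&h3&h4&h5&h6&h7&h8); eauto. Qed.
Lemma es_trans (e1 e2 e3 : E) : leq e1 e2 -> leq e2 e3 -> leq e1 e3. Proof. destruct HE as (h1&h2&h3&h4&h5&h6&h7&h8); eauto. Qed.
Lemma es_anti (e1 e2 : E) : leq e1 e2 -> leq e2 e1 -> e1 = e2. Proof. destruct HE as (h1&h2&h3&h4&h5&h6&h7&h8); eauto. Qed.
Lemma es_hist (e : E) : finite (fun d => leq d e). Proof. destruct HE as (h1&h2&h3&h4&h5&h6&h7&h8); eauto. Qed.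
Lemma es_confin (X : E -> Prop) : con X -> finite X. Proof. destruct HE as (h1&h2&h3&h4&h5&h6&h7&h8); eauto. Qed.
Lemma es_con1 (e : E) : con (fun d => d = e). Proof. destruct HE as (h1&h2&h3&h4&h5&h6&h7&h8); eauto. Qed.
Lemma es_consub (X Y : E -> Prop) : con Y -> (forall e, X e -> Y e) -> con X. Proof. destruct HE as (h1&h2&h3&h4&h5&h6&h7&h8); eauto. Qed.

Lemma imm_below (e' e : E) : ltE e' e -> exists d, leq e' d /\ imm d e.
Proof.
  intro H. destruct (es_hist e) as [l Hl].
  destruct (max_exists (@leq E) es_trans es_anti l (fun d => leq e' d /\ ltE d e)) as [m [[H1 H2] Hm]].
  - intros x [_ [Hx _]]; auto.
  - exists e'; split; auto; apply es_refl.
  - exists m; split; auto; split; auto.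
    intros [d [[Hmd Hne] Hde]]. apply Hne; symmetry; apply Hm; auto.
    split; auto; eapply es_trans; eauto.
Qed.

Lemma imm_above (e e' : E) : ltE e e' -> exists d, imm e d /\ leq d e'.
Proof.
  intro H. destruct (es_hist e') as [l Hl].
  destruct (max_exists (fun x y => @leq E y x) (fun x y z h1 h2 => es_trans z y x h2 h1)
              (fun x y h1 h2 => es_anti x y h2 h1) l (fun d => ltE e d /\ leq d e')) as [m [[H1 H2] Hm]].
  - intros x [_ Hx]; auto.
  - exists e'; split; auto; apply es_refl.
  - exists m; split; auto; split; auto.
    intros [d [Hed [Hdm Hne]]]. apply Hne; apply Hm; auto.
    split; auto; eapply es_trans; eauto.
Qed.
End ESlemmas.


Section PB.
Context (E F : esp) (G : Type) (f : E -> G) (g : F -> G) (HEc : forall X Y : E -> Prop, con Y -> (forall e, X e -> Y e) -> con X)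
  (HFc : forall X Y : F -> Prop, con Y -> (forall e, X e -> Y e) -> con X).

Definition inj2 (th : E * F -> Prop) :=
  (forall e e1 e2, th (e, e1) -> th (e, e2) -> e1 = e2) /\
  (forall e1 e2 e', th (e1, e') -> th (e2, e') -> e1 = e2).

Lemma sb_inj th : securedBij E F f g th -> inj2 th.
Proof. intros (h1&h2&h3&h4&h5&h6&h7); split; auto. Qed.

Lemma sb_inj1 th e e1 e2 : securedBij E F f g th -> th (e, e1) -> th (e, e2) -> e1 = e2.
Proof. intros (h1&h2&h3&h4&h5&h6&h7); eauto. Qed.
Lemma sb_inj2 th e1 e2 e' : securedBij E F f g th -> th (e1, e') -> th (e2, e') -> e1 = e2.
Proof. intros (h1&h2&h3&h4&h5&h6&h7); eauto. Qed.
Lemma sb_acyc th p : securedBij E F f g th -> ~ clos_trans _ (pbRel E F th) p p.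
Proof. intros (h1&h2&h3&h4&h5&h6&h7); eauto. Qed.
Lemma sb_fin th : securedBij E F f g th -> finite th.
Proof. intros (h1&h2&h3&h4&h5&h6&h7); eauto. Qed.
Lemma sb_match th p : securedBij E F f g th -> th p -> f (fst p) = g (snd p).
Proof. intros (h1&h2&h3&h4&h5&h6&h7); eauto. Qed.
Lemma sb_confE th : securedBij E F f g th -> conf E (fun e => exists e', th (e, e')).
Proof. intros (h1&h2&h3&h4&h5&h6&h7); eauto. Qed.
Lemma sb_confF th : securedBij E F f g th -> conf F (fun e' => exists e, th (e, e')).
Proof. intros (h1&h2&h3&h4&h5&h6&h7); eauto. Qed.

Lemma sb_downE th a b a' : securedBij E F f g th -> th (a, b) -> leq a' a -> exists b', th (a', b').
Proof. intros H Hab Ha. destruct (sb_confE th H) as (_&Hd&_). eapply Hd; eauto. Qed.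
Lemma sb_downF th a b b' : securedBij E F f g th -> th (a, b) -> leq b' b -> exists a', th (a', b').
Proof. intros H Hab Ha. destruct (sb_confF th H) as (_&Hd&_). eapply Hd; eauto. Qed.

Lemma pbRel_mono (th1 th2 : E * F -> Prop) p q :
  (forall r, th1 r -> th2 r) -> pbRel E F th1 p q -> pbRel E F th2 p q.
Proof. intros H (h1&h2&h3); repeat split; auto. Qed.

Lemma rt_mono (th1 th2 : E * F -> Prop) p q :
  (forall r, th1 r -> th2 r) -> clos_refl_trans _ (pbRel E F th1) p q -> clos_refl_trans _ (pbRel E F th2) p q.
Proof. intros H; induction 1; [apply rt_step; eapply pbRel_mono; eauto|apply rt_refl|eapply rt_trans; eauto]. Qed.

Lemma t_mono (th1 th2 : E * F -> Prop) p q :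
  (forall r, th1 r -> th2 r) -> clos_trans _ (pbRel E F th1) p q -> clos_trans _ (pbRel E F th2) p q.
Proof. intros H; induction 1; [apply t_step; eapply pbRel_mono; eauto|eapply t_trans; eauto]. Qed.

Lemma rt_in_l th p q : clos_refl_trans _ (pbRel E F th) p q -> th q -> th p.
Proof. intros H; apply clos_rt_rt1n in H; induction H; auto. intros _. destruct H as (?&?&?); auto. Qed.

Lemma below_in th (th' : E * F -> Prop) r q :
  securedBij E F f g th -> securedBij E F f g th' -> (forall p, th' p -> th p) ->
  clos_refl_trans _ (pbRel E F th) r q -> th' q -> th' r.
Proof.
  intros Hs Hs' Hsub H. apply clos_rt_rt1n in H. induction H as [|x y z Hxy Hyz IH]; auto.
  intro Hz. specialize (IH Hz). destruct Hxy as (Hx&Hy&[[Hl _]|[Hl _]]); destruct x as [a b], y as [a' b']; simpl in *.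
  - destruct (sb_downE th' a' b' a Hs' IH Hl) as [b2 Hb2].
    rewrite (sb_inj1 th a b b2 Hs Hx (Hsub _ Hb2)); auto.
  - destruct (sb_downF th' a' b' b Hs' IH Hl) as [a2 Ha2].
    rewrite (sb_inj2 th a a2 b Hs Hx (Hsub _ Ha2)); auto.
Qed.

Lemma ev_below (th : E * F -> Prop) (d : pbEv E F f g) r :
  securedBij E F f g th -> (forall p, pb_bij d p -> th p) ->
  clos_refl_trans _ (pbRel E F th) r (pb_top d) -> pb_bij d r.
Proof. intros Hs Hsub H. eapply below_in; eauto. apply pb_sec. apply pb_in. Qed.

Lemma ev_le_top (th : E * F -> Prop) (d e : pbEv E F f g) :
  securedBij E F f g th -> (forall p, pb_bij d p -> th p) -> (forall p, pb_bij e p -> th p) ->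
  clos_refl_trans _ (pbRel E F th) (pb_top d) (pb_top e) -> forall p, pb_bij d p -> pb_bij e p.
Proof.
  intros Hs Hd He Hde p Hp. eapply ev_below; eauto. eapply rt_trans; [|exact Hde].
  eapply rt_mono; [|apply pb_prime; auto]. auto.
Qed.

Lemma pbEv_ext (d e : pbEv E F f g) : (forall p, pb_bij d p <-> pb_bij e p) -> d = e.
Proof.
  intro H. destruct d as [b1 t1 s1 i1 p1], e as [b2 t2 s2 i2 p2]; simpl in *.
  assert (b1 = b2) by (apply pred_ext; auto). subst b2.
  assert (t1 = t2).
  { apply NNPP; intro Hne. apply (sb_acyc b1 t1 s1). apply rt_t_cycle with t2; auto. }
  subst t2. f_equal; apply proof_irrelevance.
Qed.

Lemma ev_det_top (th : E * F -> Prop) (d e : pbEv E F f g) :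
  securedBij E F f g th -> (forall p, pb_bij d p -> th p) -> (forall p, pb_bij e p -> th p) ->
  pb_top d = pb_top e -> d = e.
Proof.
  intros Hs Hd He Ht. apply pbEv_ext; split; apply ev_le_top with th; auto; rewrite Ht; apply rt_refl.
Qed.

Lemma sb_sub (th th' : E * F -> Prop) :
  securedBij E F f g th -> (forall p, th' p -> th p) ->
  (forall a b a', th' (a, b) -> leq a' a -> exists b', th' (a', b')) ->
  (forall a b b', th' (a, b) -> leq b' b -> exists a', th' (a', b')) ->
  securedBij E F f g th'.
Proof.
  intros Hs Hsub HdE HdF.
  destruct Hs as (h1&h2&h3&h4&h5&h6&h7).
  split; [eapply finite_sub; eauto|].
  split; [auto|].
  split; [|split; [|split; [|split]]].
  - destruct h3 as (c1&c2&c3). split; [eapply finite_sub; [exact c1|]; intros x [y Hy]; eauto|].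
    split. { intros e e' [y Hy] Hl; eauto. }
    eapply HEc; eauto. intros x [y Hy]; eauto.
  - destruct h4 as (c1&c2&c3). split; [eapply finite_sub; [exact c1|]; intros x [y Hy]; eauto|].
    split. { intros e e' [y Hy] Hl; eauto. }
    eapply HFc; eauto. intros x [y Hy]; eauto.
  - intros; eauto.
  - intros; eauto.
  - intros p Hp. apply (h7 p). eapply t_mono; eauto.
Qed.

Definition primeSet (th : E * F -> Prop) (q : E * F) : E * F -> Prop :=
  fun r => th r /\ clos_refl_trans _ (pbRel E F th) r q.

Lemma primeSet_sb th q : securedBij E F f g th -> securedBij E F f g (primeSet th q).
Proof.
  intros Hs. apply sb_sub with th; [auto| intros p [Hp _]; auto| |].
  - intros a b a' [Hab Hq] Hl. destruct (sb_downE th a b a' Hs Hab Hl) as [b' Hb'].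
    exists b'; split; auto. destruct (classic (a' = a)) as [->|Hne].
    + rewrite (sb_inj1 th a b' b Hs Hb' Hab); auto.
    + eapply rt_trans; [|exact Hq]. apply rt_step. split; [auto|split; [auto|left; split; auto]].
  - intros a b b' [Hab Hq] Hl. destruct (sb_downF th a b b' Hs Hab Hl) as [a' Ha'].
    exists a'; split; auto. destruct (classic (b' = b)) as [->|Hne].
    + rewrite (sb_inj2 th a' a b Hs Ha' Hab); auto.
    + eapply rt_trans; [|exact Hq]. apply rt_step. split; [auto|split; [auto|right; split; auto]].
Qed.

Lemma primeSet_prime th q r : primeSet th q r -> clos_refl_trans _ (pbRel E F (primeSet th q)) r q.
Proof.
  intros [Hr H]. apply clos_rt_rt1n in H. induction H as [|x y z Hxy Hyz IH]; [apply rt_refl|].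
  assert (Hy : clos_refl_trans _ (pbRel E F th) y z) by (apply clos_rt1n_rt; auto).
  eapply rt_trans; [apply rt_step|apply IH].
  - destruct Hxy as (h1&h2&h3). repeat split; auto. eapply rt_trans; [apply rt_step; repeat split; eauto|]; auto.
  - destruct Hxy as (h1&h2&h3); auto.
Qed.

Definition primeOf (th : E * F -> Prop) (q : E * F) (Hs : securedBij E F f g th) (Hq : th q) : pbEv E F f g :=
  @PbEv E F G f g (primeSet th q) q (primeSet_sb th q Hs) (conj Hq (rt_refl _ _ q)) (primeSet_prime th q).

Lemma primeOf_sub th q Hs Hq p : pb_bij (primeOf th q Hs Hq) p -> th p.
Proof. intros [H _]; auto. Qed.


Lemma R_neq th p q : pbRel E F th p q -> p <> q.
Proof. intros (_&_&[[_ H]|[_ H]]) ->; auto. Qed.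

Lemma cmpE th r1 r2 : securedBij E F f g th -> th r1 -> th r2 -> leq (fst r1) (fst r2) ->
  clos_refl_trans _ (pbRel E F th) r1 r2.
Proof.
  intros Hs H1 H2 Hl. destruct r1 as [a1 b1], r2 as [a2 b2]; simpl in *.
  destruct (classic (a1 = a2)) as [<-|Hne].
  - rewrite (sb_inj1 th a1 b1 b2 Hs H1 H2); apply rt_refl.
  - apply rt_step; split; [auto|split; [auto|left; split; auto]].
Qed.

Lemma cmpF th r1 r2 : securedBij E F f g th -> th r1 -> th r2 -> leq (snd r1) (snd r2) ->
  clos_refl_trans _ (pbRel E F th) r1 r2.
Proof.
  intros Hs H1 H2 Hl. destruct r1 as [a1 b1], r2 as [a2 b2]; simpl in *.
  destruct (classic (b1 = b2)) as [<-|Hne].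
  - rewrite (sb_inj2 th a1 a2 b1 Hs H1 H2); apply rt_refl.
  - apply rt_step; split; [auto|split; [auto|right; split; auto]].
Qed.

Lemma rt_first {X : Type} (R : X -> X -> Prop) a b :
  clos_refl_trans X R a b -> a = b \/ exists c, R a c /\ clos_refl_trans X R c b.
Proof.
  intro H; apply clos_rt_rt1n in H; destruct H as [|y z Hy Hz]; auto.
  right; exists y; split; auto; apply clos_rt1n_rt; auto.
Qed.

Definition addP (th : E * F -> Prop) (n : E * F) : E * F -> Prop := fun p => th p \/ p = n.

Lemma sb_extend th a0 b0 : securedBij E F f g th -> f a0 = g b0 ->
  conf E (fun a => (exists b, th (a, b)) \/ a = a0) ->
  conf F (fun b => (exists a, th (a, b)) \/ b = b0) ->
  ~ (exists b, th (a0, b)) -> ~ (exists a, th (a, b0)) ->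
  securedBij E F f g (addP th (a0, b0)).
Proof.
  intros Hs Hm HcE HcF HnE HnF.
  destruct Hs as (h1&h2&h3&h4&h5&h6&h7).
  assert (Hmax : forall r, ~ pbRel E F (addP th (a0, b0)) (a0, b0) r).
  { intros r (_&Hr&[[Hl Hne]|[Hl Hne]]); destruct Hr as [Hr| ->]; simpl in *; try (apply Hne; reflexivity);
      destruct r as [a b]; simpl in *.
    - apply HnE. destruct h3 as (_&Hd&_). eapply Hd; eauto.
    - apply HnF. destruct h4 as (_&Hd&_). eapply Hd; eauto. }
  split; [apply finite_add; auto|].
  split. { intros p [Hp| ->]; auto. }
  split.
  { match goal with |- conf E ?P => replace P with (fun a => (exists b, th (a, b)) \/ a = a0); [exact HcE|] end.
    apply pred_ext. intro a; split.
    - intros [[b Hb]| ->]; [exists b; left; auto|exists b0; right; auto].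
    - intros [b [Hb|Hb]]; [left; eauto|right; congruence]. }
  split.
  { match goal with |- conf F ?P => replace P with (fun b => (exists a, th (a, b)) \/ b = b0); [exact HcF|] end.
    apply pred_ext. intro b; split.
    - intros [[a Ha]| ->]; [exists a; left; auto|exists a0; right; auto].
    - intros [a [Ha|Ha]]; [left; eauto|right; congruence]. }
  split.
  { intros e e1 e2 [H1|H1] [H2|H2]; eauto.
    - inversion H2; subst. exfalso; apply HnE; eauto.
    - inversion H1; subst. exfalso; apply HnE; eauto.
    - inversion H1; inversion H2; congruence. }
  split.
  { intros e1 e2 e' [H1|H1] [H2|H2]; eauto.
    - inversion H2; subst. exfalso; apply HnF; eauto.
    - inversion H1; subst. exfalso; apply HnF; eauto.
    - inversion H1; inversion H2; congruence. }
  intros p Hp.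
  assert (Hgen : forall p q, clos_trans _ (pbRel E F (addP th (a0, b0))) p q ->
            clos_trans _ (pbRel E F th) p q \/ q = (a0, b0)).
  { intros p0 q0 H. induction H as [x y Hxy|x y z Hxy IH1 Hyz IH2].
    - destruct Hxy as (Hx&Hy&Hr). destruct Hy as [Hy| ->]; auto.
      destruct Hx as [Hx| ->]; [left; apply t_step; split; auto|].
      exfalso; eapply Hmax; split; [right; eauto|split; [left; exact Hy|exact Hr]].
    - destruct IH2 as [IH2|IH2]; auto. destruct IH1 as [IH1| ->]; [left; eapply t_trans; eauto|].
      exfalso. apply clos_trans_t1n in Hyz. destruct Hyz as [z Hz|z w Hz _]; eapply Hmax; eauto. }
  destruct (Hgen p p Hp) as [H|H]; [eapply h7; eauto|].
  subst p. apply clos_trans_t1n in Hp. destruct Hp as [z Hz|z w Hz _]; eapply Hmax; eauto.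
Qed.

Lemma addP_max th a0 b0 : securedBij E F f g th -> ~ (exists b, th (a0, b)) -> ~ (exists a, th (a, b0)) ->
  forall r, ~ pbRel E F (addP th (a0, b0)) (a0, b0) r.
Proof.
  intros Hs HnE HnF r (_&Hr&[[Hl Hne]|[Hl Hne]]); destruct Hr as [Hr| ->]; simpl in *; try (apply Hne; reflexivity);
    destruct r as [a b]; simpl in *.
  - apply HnE. eapply sb_downE; eauto.
  - apply HnF. eapply sb_downF; eauto.
Qed.

Lemma rt_remove_max th n p q : (forall r, ~ pbRel E F (addP th n) n r) -> q <> n ->
  clos_refl_trans _ (pbRel E F (addP th n)) p q -> clos_refl_trans _ (pbRel E F th) p q.
Proof.
  intros Hmax Hq H. apply clos_rt_rt1n in H. induction H as [|x y z Hxy Hyz IH]; [apply rt_refl|].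
  assert (Hy : y <> n).
  { intros ->. destruct Hyz as [|y' z' Hy' _]; [auto|eapply Hmax; eauto]. }
  assert (Hx : x <> n) by (intros ->; eapply Hmax; eauto).
  eapply rt_trans; [apply rt_step|apply IH; auto].
  destruct Hxy as (h1&h2&h3); split; [destruct h1; tauto|split; [destruct h2; tauto|auto]].
Qed.

End PB.


Section Par.
Context (E F : esp).

Lemma leq_inl_r (u : par E F) (a : E) : @leq (par E F) u (inl a) -> exists a', u = inl a' /\ leq a' a.
Proof. destruct u; simpl; [eauto|tauto]. Qed.
Lemma leq_inr_r (u : par E F) (a : F) : @leq (par E F) u (inr a) -> exists a', u = inr a' /\ leq a' a.
Proof. destruct u; simpl; [tauto|eauto]. Qed.
Lemma leq_inl_l (u : par E F) (a : E) : @leq (par E F) (inl a) u -> exists a', u = inl a' /\ leq a a'.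
Proof. destruct u; simpl; [eauto|tauto]. Qed.
Lemma leq_inr_l (u : par E F) (a : F) : @leq (par E F) (inr a) u -> exists a', u = inr a' /\ leq a a'.
Proof. destruct u; simpl; [tauto|eauto]. Qed.

Lemma ltE_inl_r (u : par E F) (a : E) : @ltE (par E F) u (inl a) -> exists a', u = inl a' /\ ltE a' a.
Proof. intros [H Hn]; destruct (leq_inl_r u a H) as [a' [-> Ha]]; exists a'; split; auto; split; auto; congruence. Qed.
Lemma ltE_inr_r (u : par E F) (a : F) : @ltE (par E F) u (inr a) -> exists a', u = inr a' /\ ltE a' a.
Proof. intros [H Hn]; destruct (leq_inr_r u a H) as [a' [-> Ha]]; exists a'; split; auto; split; auto; congruence. Qed.
Lemma ltE_inl_l (u : par E F) (a : E) : @ltE (par E F) (inl a) u -> exists a', u = inl a' /\ ltE a a'.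
Proof. intros [H Hn]; destruct (leq_inl_l u a H) as [a' [-> Ha]]; exists a'; split; auto; split; auto; congruence. Qed.
Lemma ltE_inr_l (u : par E F) (a : F) : @ltE (par E F) (inr a) u -> exists a', u = inr a' /\ ltE a a'.
Proof. intros [H Hn]; destruct (leq_inr_l u a H) as [a' [-> Ha]]; exists a'; split; auto; split; auto; congruence. Qed.

Lemma ltE_inl (a b : E) : ltE a b -> @ltE (par E F) (inl a) (inl b).
Proof. intros [H Hn]; split; [exact H|congruence]. Qed.
Lemma ltE_inr (a b : F) : ltE a b -> @ltE (par E F) (inr a) (inr b).
Proof. intros [H Hn]; split; [exact H|congruence]. Qed.

Lemma imm_inl_r (u : par E F) (a : E) : @imm (par E F) u (inl a) -> exists a', u = inl a' /\ imm a' a.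
Proof.
  intros [H Hn]; destruct (ltE_inl_r u a H) as [a' [-> Ha]]; exists a'; split; auto; split; auto.
  intros [d [H1 H2]]; apply Hn; exists (inl d); split; apply ltE_inl; auto.
Qed.
Lemma imm_inr_r (u : par E F) (a : F) : @imm (par E F) u (inr a) -> exists a', u = inr a' /\ imm a' a.
Proof.
  intros [H Hn]; destruct (ltE_inr_r u a H) as [a' [-> Ha]]; exists a'; split; auto; split; auto.
  intros [d [H1 H2]]; apply Hn; exists (inr d); split; apply ltE_inr; auto.
Qed.
Lemma imm_inl_l (u : par E F) (a : E) : @imm (par E F) (inl a) u -> exists a', u = inl a' /\ imm a a'.
Proof.
  intros [H Hn]; destruct (ltE_inl_l u a H) as [a' [-> Ha]]; exists a'; split; auto; split; auto.
  intros [d [H1 H2]]; apply Hn; exists (inl d); split; apply ltE_inl; auto.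
Qed.
Lemma imm_inr_l (u : par E F) (a : F) : @imm (par E F) (inr a) u -> exists a', u = inr a' /\ imm a a'.
Proof.
  intros [H Hn]; destruct (ltE_inr_l u a H) as [a' [-> Ha]]; exists a'; split; auto; split; auto.
  intros [d [H1 H2]]; apply Hn; exists (inr d); split; apply ltE_inr; auto.
Qed.

Lemma imm_inl (a b : E) : imm a b -> @imm (par E F) (inl a) (inl b).
Proof.
  intros [H Hn]; split; [apply ltE_inl; auto|].
  intros [d [H1 H2]]; destruct (ltE_inl_l d a H1) as [d' [-> Hd]].
  destruct (ltE_inl_r _ b H2) as [d'' [Heq Hd']]; inversion Heq; subst; apply Hn; eauto.
Qed.
Lemma imm_inr (a b : F) : imm a b -> @imm (par E F) (inr a) (inr b).
Proof.
  intros [H Hn]; split; [apply ltE_inr; auto|].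
  intros [d [H1 H2]]; destruct (ltE_inr_l d a H1) as [d' [-> Hd]].
  destruct (ltE_inr_r _ b H2) as [d'' [Heq Hd']]; inversion Heq; subst; apply Hn; eauto.
Qed.

Lemma conf_par_l (X : par E F -> Prop) : conf (par E F) X -> conf E (fun a => X (inl a)).
Proof.
  intros (h1&h2&h3). split; [|split].
  - eapply finite_inj with (g := inl); [exact h1| |]; auto. intros x y _ _ H; inversion H; auto.
  - intros e e' He Hl. apply (h2 (inl e) (inl e')); auto.
  - destruct h3; auto.
Qed.
Lemma conf_par_r (X : par E F -> Prop) : conf (par E F) X -> conf F (fun a => X (inr a)).
Proof.
  intros (h1&h2&h3). split; [|split].
  - eapply finite_inj with (g := inr); [exact h1| |]; auto. intros x y _ _ H; inversion H; auto.
  - intros e e' He Hl. apply (h2 (inr e) (inr e')); auto.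
  - destruct h3; auto.
Qed.
Lemma conf_par_mk (X : par E F -> Prop) : conf E (fun a => X (inl a)) -> conf F (fun a => X (inr a)) -> conf (par E F) X.
Proof.
  intros (h1&h2&h3) (k1&k2&k3). split; [|split].
  - destruct h1 as [l Hl], k1 as [m Hm]. exists (map inl l ++ map inr m).
    intros [a|b] H; apply in_or_app; [left|right]; apply in_map; auto.
  - intros [a|b] [a'|b'] H Hl; simpl in Hl; try contradiction; eauto.
  - split; auto.
Qed.

Lemma consub_par (HEc : forall X Y : E -> Prop, con Y -> (forall e, X e -> Y e) -> con X)
  (HFc : forall X Y : F -> Prop, con Y -> (forall e, X e -> Y e) -> con X) :
  forall X Y : par E F -> Prop, con Y -> (forall e, X e -> Y e) -> con X.
Proof. intros X Y [H1 H2] H; split; [eapply HEc|eapply HFc]; eauto; intros e He; exact (H _ He). Qed.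

End Par.

Lemma consub_ES (E : esp) : isES E -> forall X Y : E -> Prop, con Y -> (forall e, X e -> Y e) -> con X.
Proof. intros HE; apply es_consub; auto. Qed.

Lemma arena_con (A : esp) : isArena A -> forall X : A -> Prop, finite X -> con X.
Proof. intros (_&_&_&H&_); auto. Qed.

Lemma arena_ES (A : esp) : isArena A -> isES A.
Proof. intros (H&_); auto. Qed.

Lemma arena_forest (A : esp) : isArena A -> forall a a1 a2 : A, leq a1 a -> leq a2 a -> leq a1 a2 \/ leq a2 a1.
Proof. intros (_&_&H&_); auto. Qed.

Lemma isES_arena_par (A C : esp) : isArena A -> isArena C -> isES (par (dual A) C).
Proof.
  intros HA HC. pose proof (arena_ES A HA) as (a1&a2&a3&a4&a5&a6&a7&a8).
  pose proof (arena_ES C HC) as (c1&c2&c3&c4&c5&c6&c7&c8).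
  split; [intros [a|c]; simpl; auto|].
  split; [intros [a|c] [a'|c'] [a''|c'']; simpl; try tauto; eauto|].
  split; [intros [a|c] [a'|c']; simpl; try tauto; intros; f_equal; eauto|].
  split.
  { intros [a|c].
    - destruct (a4 a) as [l Hl]; exists (map inl l); intros [d|d] Hd; simpl in Hd; try contradiction; apply in_map; auto.
    - destruct (c4 c) as [l Hl]; exists (map inr l); intros [d|d] Hd; simpl in Hd; try contradiction; apply in_map; auto. }
  split.
  { intros X [H1 H2]. apply a5 in H1; apply c5 in H2. destruct H1 as [l Hl], H2 as [m Hm].
    exists (map inl l ++ map inr m); intros [a|b] H; apply in_or_app; [left|right]; apply in_map; auto. }
  assert (Hfin : forall X : par (dual A) C -> Prop, finite X -> con X).
  { intros X HX; split; [apply (arena_con A HA)|apply (arena_con C HC)].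
    - eapply finite_inj with (g := inl); [exact HX| |]; auto. intros x y _ _ H; inversion H; auto.
    - eapply finite_inj with (g := inr); [exact HX| |]; auto. intros x y _ _ H; inversion H; auto. }
  split. { intro e; apply Hfin; exists (e :: nil); intros x ->; simpl; auto. }
  split. { intros X Y HY HXY; apply Hfin. destruct HY as [H1 H2]. apply a5 in H1; apply c5 in H2.
    destruct H1 as [l Hl], H2 as [m Hm].
    exists (map inl l ++ map inr m); intros [a|b] H; apply in_or_app; [left|right]; apply in_map.
    - apply Hl; apply (HXY (inl a)); auto.
    - apply Hm; apply (HXY (inr b)); auto. }
  intros X e e' HX _ _. apply Hfin. apply finite_add. destruct HX as [H1 H2]. apply a5 in H1; apply c5 in H2.
  destruct H1 as [l Hl], H2 as [m Hm].
  exists (map inl l ++ map inr m); intros [a|b] H; apply in_or_app; [left|right]; apply in_map; auto.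
Qed.


Section Comp.
Context (A B C S T : esp) (sigma : S -> par (dual A) B) (tau : T -> par (dual B) C)
  (HA : isArena A) (HB : isArena B) (HC : isArena C)
  (Hsig : isStrategy sigma) (HbS : backSeq S) (Htau : isStrategy tau) (HbT : backSeq T).

Notation SC := (par S C).
Notation AT := (par A T).
Notation fS := (sigmaC (C:=C) sigma).
Notation gT := (Atau (A:=A) tau).
Notation SB := (securedBij SC AT fS gT).
Notation Rl th := (pbRel SC AT th).
Notation rtR th := (clos_refl_trans _ (pbRel SC AT th)).
Notation IEv := (pbEv SC AT fS gT).
Notation CE := (compEv S T sigma tau).

Lemma HSes : isES S. Proof. destruct Hsig; auto. Qed.
Lemma HTes : isES T. Proof. destruct Htau; auto. Qed.
Lemma HAes : isES A. Proof. apply arena_ES; auto. Qed.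
Lemma HCes : isES C. Proof. apply arena_ES; auto. Qed.
Lemma Hsmap : isMap sigma. Proof. destruct Hsig as (_&_&H&_); auto. Qed.
Lemma Htmap : isMap tau. Proof. destruct Htau as (_&_&H&_); auto. Qed.
Lemma Hscourt : courteous sigma. Proof. destruct Hsig as (_&_&_&H&_); auto. Qed.
Lemma Htcourt : courteous tau. Proof. destruct Htau as (_&_&_&H&_); auto. Qed.
Lemma Hsrec : receptive sigma. Proof. destruct Hsig as (_&_&_&_&H); auto. Qed.
Lemma Htrec : receptive tau. Proof. destruct Htau as (_&_&_&_&H); auto. Qed.

Lemma cSC : forall X Y : SC -> Prop, con Y -> (forall e, X e -> Y e) -> con X.
Proof. apply consub_par; apply consub_ES; [apply HSes|apply HCes]. Qed.
Lemma cAT : forall X Y : AT -> Prop, con Y -> (forall e, X e -> Y e) -> con X.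
Proof. apply consub_par; apply consub_ES; [apply HAes|apply HTes]. Qed.

Lemma pair_cases (p : SC * AT) : fS (fst p) = gT (snd p) ->
  (exists s a, p = (inl s, inl a) /\ sigma s = inl a) \/
  (exists s t b, p = (inl s, inr t) /\ sigma s = inr b /\ tau t = inl b) \/
  (exists c t, p = (inr c, inr t) /\ tau t = inr c).
Proof.
  destruct p as [[s|c] [a|t]]; simpl.
  - intro H; inversion H; left; eauto.
  - destruct (tau t) as [b|c] eqn:Et; intro H; inversion H.
    right; left; exists s, t, b; repeat split; auto.
  - intro H; inversion H.
  - destruct (tau t) as [b|c'] eqn:Et; intro H; inversion H; subst.
    right; right; eauto.
Qed.

Lemma m_inlS s w a : fS (inl s) = gT w -> sigma s = inl a -> w = inl a.
Proof.
  intros H Hs. destruct (pair_cases (inl s, w) H) as [(s'&a'&He&Hs')|[(s'&t&b&He&Hs'&Ht)|(c&t&He&Ht)]];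
    inversion He; subst; try congruence.
  rewrite Hs in Hs'; injection Hs'; intros ->; reflexivity.
Qed.
Lemma m_inlA u a : fS u = gT (inl a) -> exists s, u = inl s /\ sigma s = inl a.
Proof.
  intros H. destruct (pair_cases (u, inl a) H) as [(s'&a'&He&Hs')|[(s'&t&b&He&Hs'&Ht)|(c&t&He&Ht)]];
    inversion He; subst; eauto.
Qed.
Lemma m_inrC c w : fS (inr c) = gT w -> exists t, w = inr t /\ tau t = inr c.
Proof.
  intros H. destruct (pair_cases (inr c, w) H) as [(s'&a'&He&Hs')|[(s'&t&b&He&Hs'&Ht)|(c'&t&He&Ht)]];
    inversion He; subst; eauto.
Qed.
Lemma m_inrT u t c : fS u = gT (inr t) -> tau t = inr c -> u = inr c.
Proof.
  intros H Ht. destruct (pair_cases (u, inr t) H) as [(s'&a'&He&Hs')|[(s'&t'&b&He&Hs'&Ht')|(c'&t'&He&Ht')]];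
    inversion He; subst; congruence.
Qed.
Lemma m_inlSB s w b : fS (inl s) = gT w -> sigma s = inr b -> exists t, w = inr t /\ tau t = inl b.
Proof.
  intros H Hs. destruct (pair_cases (inl s, w) H) as [(s'&a'&He&Hs')|[(s'&t&b'&He&Hs'&Ht)|(c&t&He&Ht)]];
    inversion He; subst; try congruence. exists t; split; auto. congruence.
Qed.
Lemma m_inrTB u t b : fS u = gT (inr t) -> tau t = inl b -> exists s, u = inl s /\ sigma s = inr b.
Proof.
  intros H Ht. destruct (pair_cases (u, inr t) H) as [(s'&a'&He&Hs')|[(s'&t'&b'&He&Hs'&Ht')|(c'&t'&He&Ht')]];
    inversion He; subst; try congruence. exists s'; split; auto.
  rewrite Ht in Ht'; injection Ht'; intros <-; exact Hs'.
Qed.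

Lemma ce_eq (x y : CE) : ce_ev x = ce_ev y -> x = y.
Proof.
  destruct x as [ex ix vx], y as [ey iy vy]; simpl. intros ->.
  assert (ix = iy) by congruence. subst iy. f_equal. apply proof_irrelevance.
Qed.

Lemma vis_cases (x : CE) :
  (exists s a, pb_top (ce_ev x) = (inl s, inl a) /\ sigma s = inl a /\ ce_img x = inl a) \/
  (exists c t, pb_top (ce_ev x) = (inr c, inr t) /\ tau t = inr c /\ ce_img x = inr c).
Proof.
  destruct x as [e i v]; simpl in *.
  pose proof (sb_match _ _ _ _ _ _ _ (pb_sec e) (pb_in e)) as Hm.
  destruct (pair_cases _ Hm) as [(s&a&He&Hs)|[(s&t&b&He&Hs&Ht)|(c&t&He&Ht)]]; rewrite He in v; simpl in v.
  - rewrite Hs in v; simpl in v; inversion v; left; eauto.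
  - rewrite Hs in v; simpl in v; inversion v.
  - inversion v; right; eauto.
Qed.

Lemma vis_below (e : CE) q (Hq : pb_bij (ce_ev e) q) i : hideB A B C (fS (fst q)) = Some i ->
  exists d : CE, ce_img d = i /\ pb_top (ce_ev d) = q /\ (forall p, pb_bij (ce_ev d) p -> pb_bij (ce_ev e) p).
Proof.
  intro H.
  exists (@CompEv A B C S T sigma tau (primeOf _ _ _ _ _ cSC cAT (pb_bij (ce_ev e)) q (pb_sec _) Hq) i H).
  split; [reflexivity|split; [reflexivity|]]. intros p Hp. eapply primeOf_sub; eauto.
Qed.

Lemma xS_conf th : SB th -> conf S (fun s => exists w, th (inl s, w)).
Proof. intro H. apply (conf_par_l S C (fun u => exists w, th (u, w))). eapply sb_confE; eauto. Qed.
Lemma xT_conf th : SB th -> conf T (fun t => exists u, th (u, inr t)).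
Proof. intro H. apply (conf_par_r A T (fun w => exists u, th (u, w))). eapply sb_confF; eauto. Qed.

Lemma s_reflect th s w s' w' : SB th -> th (inl s, w) -> th (inl s', w') -> leq (sigma s') (sigma s) -> leq s' s.
Proof.
  intros Hth H1 H2 Hle.
  pose proof (xS_conf th Hth) as Hx. destruct Hx as (x1&x2&x3).
  assert (Hh : conf S (fun d => leq d s)).
  { split; [|split].
    - apply es_hist. apply HSes.
    - intros e e' He Hl. exact (es_trans _ HSes _ _ _ Hl He).
    - eapply es_consub; [apply HSes|exact x3|]. intros e He. eapply x2; [|exact He]. eauto. }
  destruct Hsmap as (_&Hcf&Hinj).
  destruct (Hcf _ Hh) as (_&Hd&_).
  destruct (Hd (sigma s) (sigma s')) as [s'' [Hs'' Heq]]; [exists s; split; auto; apply es_refl, HSes|exact Hle|].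
  assert (s'' = s') as <-; [|auto].
  apply (Hinj _ (conj x1 (conj x2 x3))); eauto.
Qed.

Lemma t_reflect th t u t' u' : SB th -> th (u, inr t) -> th (u', inr t') -> leq (tau t') (tau t) -> leq t' t.
Proof.
  intros Hth H1 H2 Hle.
  pose proof (xT_conf th Hth) as Hx. destruct Hx as (x1&x2&x3).
  assert (Hh : conf T (fun d => leq d t)).
  { split; [|split].
    - apply es_hist. apply HTes.
    - intros e e' He Hl. exact (es_trans _ HTes _ _ _ Hl He).
    - eapply es_consub; [apply HTes|exact x3|]. intros e He. eapply x2; [|exact He]. eauto. }
  destruct Htmap as (_&Hcf&Hinj).
  destruct (Hcf _ Hh) as (_&Hd&_).
  destruct (Hd (tau t) (tau t')) as [t'' [Ht'' Heq]]; [exists t; split; auto; apply es_refl, HTes|exact Hle|].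
  assert (t'' = t') as <-; [|auto].
  apply (Hinj _ (conj x1 (conj x2 x3))); eauto.
Qed.


Lemma negA_pred th s a r : SB th -> th (inl s, inl a) -> sigma s = inl a -> pol s = false ->
  Rl th r (inl s, inl a) ->
  exists s0 a0, th (inl s0, inl a0) /\ sigma s0 = inl a0 /\ imm a0 a /\
    rtR th r (inl s0, inl a0) /\ Rl th (inl s0, inl a0) (inl s, inl a).
Proof.
  intros Hth Hq Hs Hp Hr. destruct Hr as (Hr&_&[Hl|Hl]).
  - destruct (ltE_inl_r S C (fst r) s Hl) as [s1 [Hr1 Hs1]].
    destruct (imm_below S HSes s1 s Hs1) as [s0 [Hs10 Hs0]].
    pose proof (Hscourt s0 s Hs0 (or_intror Hp)) as Hc. rewrite Hs in Hc.
    destruct (imm_inl_r (dual A) B (sigma s0) a Hc) as [a0 [Hs0a Ha0]].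
    destruct (sb_downE _ _ _ _ _ th (inl s) (inl a) (inl s0) Hth Hq (proj1 (proj1 Hs0))) as [w0 Hw0].
    pose proof (sb_match _ _ _ _ _ th _ Hth Hw0) as Hm. simpl in Hm.
    rewrite (m_inlS s0 w0 a0 Hm Hs0a) in Hw0.
    exists s0, a0; split; [auto|split; [auto|split; [exact Ha0|split]]].
    + apply (cmpE _ _ _ _ _ th _ _ Hth); auto. rewrite Hr1; exact Hs10.
    + split; [auto|split; [auto|left]]. apply ltE_inl. apply Hs0.
  - destruct (ltE_inl_r A T (snd r) a Hl) as [a1 [Hr1 Ha1]].
    destruct (imm_below A HAes a1 a Ha1) as [a0 [Ha10 Ha0]].
    destruct (sb_downF _ _ _ _ _ th (inl s) (inl a) (inl a0) Hth Hq (proj1 (proj1 Ha0))) as [u0 Hu0].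
    pose proof (sb_match _ _ _ _ _ th _ Hth Hu0) as Hm. simpl in Hm.
    destruct (m_inlA u0 a0 Hm) as [s0 [-> Hs0]].
    exists s0, a0; split; [auto|split; [auto|split; [exact Ha0|split]]].
    + apply (cmpF _ _ _ _ _ th _ _ Hth); auto. rewrite Hr1; exact Ha10.
    + split; [auto|split; [auto|right]]. apply ltE_inl. apply Ha0.
Qed.

Lemma negC_pred th c t r : SB th -> th (inr c, inr t) -> tau t = inr c -> pol t = false ->
  Rl th r (inr c, inr t) ->
  exists c0 t0, th (inr c0, inr t0) /\ tau t0 = inr c0 /\ imm c0 c /\
    rtR th r (inr c0, inr t0) /\ Rl th (inr c0, inr t0) (inr c, inr t).
Proof.
  intros Hth Hq Ht Hp Hr. destruct Hr as (Hr&_&[Hl|Hl]).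
  - destruct (ltE_inr_r S C (fst r) c Hl) as [c1 [Hr1 Hc1]].
    destruct (imm_below C HCes c1 c Hc1) as [c0 [Hc10 Hc0]].
    destruct (sb_downE _ _ _ _ _ th (inr c) (inr t) (inr c0) Hth Hq (proj1 (proj1 Hc0))) as [w0 Hw0].
    pose proof (sb_match _ _ _ _ _ th _ Hth Hw0) as Hm. simpl in Hm.
    destruct (m_inrC c0 w0 Hm) as [t0 [-> Ht0]].
    exists c0, t0; split; [auto|split; [auto|split; [exact Hc0|split]]].
    + apply (cmpE _ _ _ _ _ th _ _ Hth); auto. rewrite Hr1; exact Hc10.
    + split; [auto|split; [auto|left]]. apply ltE_inr. apply Hc0.
  - destruct (ltE_inr_r A T (snd r) t Hl) as [t1 [Hr1 Ht1]].
    destruct (imm_below T HTes t1 t Ht1) as [t0 [Ht10 Ht0]].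
    pose proof (Htcourt t0 t Ht0 (or_intror Hp)) as Hc. rewrite Ht in Hc.
    destruct (imm_inr_r (dual B) C (tau t0) c Hc) as [c0 [Ht0c Hc0]].
    destruct (sb_downF _ _ _ _ _ th (inr c) (inr t) (inr t0) Hth Hq (proj1 (proj1 Ht0))) as [u0 Hu0].
    pose proof (sb_match _ _ _ _ _ th _ Hth Hu0) as Hm. simpl in Hm.
    rewrite (m_inrT u0 t0 c0 Hm Ht0c) in Hu0.
    exists c0, t0; split; [auto|split; [auto|split; [exact Hc0|split]]].
    + apply (cmpF _ _ _ _ _ th _ _ Hth); auto. rewrite Hr1; exact Ht10.
    + split; [auto|split; [auto|right]]. apply ltE_inr. apply Ht0.
Qed.

Lemma posA_succ th s a r : SB th -> th (inl s, inl a) -> sigma s = inl a -> pol s = true ->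
  Rl th (inl s, inl a) r ->
  exists s1 a1, th (inl s1, inl a1) /\ sigma s1 = inl a1 /\ imm a a1 /\
    Rl th (inl s, inl a) (inl s1, inl a1) /\ rtR th (inl s1, inl a1) r.
Proof.
  intros Hth Hq Hs Hp Hr. destruct Hr as (_&Hr&[Hl|Hl]); destruct r as [u w]; simpl in Hl.
  - destruct (ltE_inl_l S C u s Hl) as [s' [-> Hs']].
    destruct (imm_above S HSes s s' Hs') as [s1 [Hs1 Hs1']].
    pose proof (Hscourt s s1 Hs1 (or_introl Hp)) as Hc. rewrite Hs in Hc.
    destruct (imm_inl_l (dual A) B (sigma s1) a Hc) as [a1 [Hs1a Ha1]].
    destruct (sb_downE _ _ _ _ _ th (inl s') w (inl s1) Hth Hr Hs1') as [w1 Hw1].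
    pose proof (sb_match _ _ _ _ _ th _ Hth Hw1) as Hm. simpl in Hm.
    rewrite (m_inlS s1 w1 a1 Hm Hs1a) in Hw1.
    exists s1, a1; split; [auto|split; [auto|split; [exact Ha1|split]]].
    + split; [auto|split; [auto|left]]. apply ltE_inl. apply Hs1.
    + apply (cmpE _ _ _ _ _ th _ _ Hth); auto.
  - destruct (ltE_inl_l A T w a Hl) as [a' [-> Ha']].
    destruct (imm_above A HAes a a' Ha') as [a1 [Ha1 Ha1']].
    destruct (sb_downF _ _ _ _ _ th u (inl a') (inl a1) Hth Hr Ha1') as [u1 Hu1].
    pose proof (sb_match _ _ _ _ _ th _ Hth Hu1) as Hm. simpl in Hm.
    destruct (m_inlA u1 a1 Hm) as [s1 [-> Hs1]].
    exists s1, a1; split; [auto|split; [auto|split; [exact Ha1|split]]].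
    + split; [auto|split; [auto|right]]. apply ltE_inl. apply Ha1.
    + apply (cmpF _ _ _ _ _ th _ _ Hth); auto.
Qed.

Lemma posC_succ th c t r : SB th -> th (inr c, inr t) -> tau t = inr c -> pol t = true ->
  Rl th (inr c, inr t) r ->
  exists c1 t1, th (inr c1, inr t1) /\ tau t1 = inr c1 /\ imm c c1 /\
    Rl th (inr c, inr t) (inr c1, inr t1) /\ rtR th (inr c1, inr t1) r.
Proof.
  intros Hth Hq Ht Hp Hr. destruct Hr as (_&Hr&[Hl|Hl]); destruct r as [u w]; simpl in Hl.
  - destruct (ltE_inr_l S C u c Hl) as [c' [-> Hc']].
    destruct (imm_above C HCes c c' Hc') as [c1 [Hc1 Hc1']].
    destruct (sb_downE _ _ _ _ _ th (inr c') w (inr c1) Hth Hr Hc1') as [w1 Hw1].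
    pose proof (sb_match _ _ _ _ _ th _ Hth Hw1) as Hm. simpl in Hm.
    destruct (m_inrC c1 w1 Hm) as [t1 [-> Ht1]].
    exists c1, t1; split; [auto|split; [auto|split; [exact Hc1|split]]].
    + split; [auto|split; [auto|left]]. apply ltE_inr. apply Hc1.
    + apply (cmpE _ _ _ _ _ th _ _ Hth); auto.
  - destruct (ltE_inr_l A T w t Hl) as [t' [-> Ht']].
    destruct (imm_above T HTes t t' Ht') as [t1 [Ht1 Ht1']].
    pose proof (Htcourt t t1 Ht1 (or_introl Hp)) as Hc. rewrite Ht in Hc.
    destruct (imm_inr_l (dual B) C (tau t1) c Hc) as [c1 [Ht1c Hc1]].
    destruct (sb_downF _ _ _ _ _ th u (inr t') (inr t1) Hth Hr Ht1') as [u1 Hu1].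
    pose proof (sb_match _ _ _ _ _ th _ Hth Hu1) as Hm. simpl in Hm.
    rewrite (m_inrT u1 t1 c1 Hm Ht1c) in Hu1.
    exists c1, t1; split; [auto|split; [auto|split; [exact Hc1|split]]].
    + split; [auto|split; [auto|right]]. apply ltE_inr. apply Ht1.
    + apply (cmpF _ _ _ _ _ th _ _ Hth); auto.
Qed.

Lemma sb_ext (P Q : SC * AT -> Prop) : (forall p, P p <-> Q p) -> SB P -> SB Q.
Proof. intros H; rewrite (pred_ext P Q H); auto. Qed.

Definition Ux (X : CE -> Prop) : SC * AT -> Prop := fun p => exists x, X x /\ pb_bij (ce_ev x) p.

Lemma con_CE (X : compESP sigma tau -> Prop) : con X <-> finite X /\ SB (Ux X).
Proof.
  simpl. split.
  - intros [Hf Hs]. split.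
    + apply (finite_inj (fun z : CE => ce_ev z) X _ Hf).
      * intros z Hz; exists z; auto.
      * intros z1 z2 _ _ H; apply ce_eq; auto.
    + match goal with H : securedBij _ _ _ _ ?P |- _ => replace (Ux X) with P; [exact H|] end.
      apply pred_ext; intro p; split.
      * intros [e [[x [Hx <-]] Hp]]; exists x; auto.
      * intros [x [Hx Hp]]; eauto.
  - intros [Hf Hs]. split.
    + eapply finite_sub; [apply (finite_image (fun x : CE => ce_ev x) X Hf)|]. intros e [x [Hx He]]; exists x; auto.
    + match goal with |- securedBij _ _ _ _ ?P => replace P with (Ux X); [exact Hs|] end.
      apply pred_ext; intro p; split.
      * intros [x [Hx Hp]]; eauto.
      * intros [e [[x [Hx <-]] Hp]]; exists x; auto.
Qed.

Lemma leqCE (x y : compESP sigma tau) : leq x y <-> (forall p, pb_bij (ce_ev x) p -> pb_bij (ce_ev y) p).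
Proof. simpl; tauto. Qed.

Lemma isES_comp : isES (compESP sigma tau).
Proof.
  split; [intros e p H; exact H|].
  split; [intros e1 e2 e3 H1 H2 p Hp; apply H2, H1, Hp|].
  split.
  { intros e1 e2 H1 H2. apply ce_eq, pbEv_ext. intro p; split; [apply H1|apply H2]. }
  split.
  { intros e. eapply finite_inj with (g := fun y : CE => pb_top (ce_ev y)) (Q := pb_bij (ce_ev e)).
    - eapply sb_fin, pb_sec.
    - intros y Hy. apply Hy, pb_in.
    - intros y z Hy Hz Ht. apply ce_eq. eapply ev_det_top; [apply (pb_sec (ce_ev e))| | |exact Ht]; auto. }
  split. { intros X HX; apply con_CE in HX; tauto. }
  split.
  { intro e. apply con_CE. split; [exists (e :: nil); intros x ->; simpl; auto|].
    apply (sb_ext (pb_bij (ce_ev e))); [|apply pb_sec].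
    intro p; split; [intro H; exists e; auto|intros [x [-> H]]; auto]. }
  split.
  { intros X Y HY HXY. apply con_CE in HY. destruct HY as [Hf Hs]. apply con_CE. split.
    - eapply finite_sub; eauto.
    - apply (sb_sub _ _ _ _ _ cSC cAT (Ux Y)); auto.
      + intros p [x [Hx Hp]]; exists x; auto.
      + intros a b a' [x [Hx Hp]] Hl. destruct (sb_downE _ _ _ _ _ _ a b a' (pb_sec (ce_ev x)) Hp Hl) as [b' Hb'].
        exists b', x; auto.
      + intros a b b' [x [Hx Hp]] Hl. destruct (sb_downF _ _ _ _ _ _ a b b' (pb_sec (ce_ev x)) Hp Hl) as [a' Ha'].
        exists a', x; auto. }
  intros X e e' HX He Hle. apply con_CE in HX. destruct HX as [Hf Hs]. apply con_CE. split.
  - apply finite_add; auto.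
  - apply (sb_ext (Ux X)); auto.
    intro p; split.
    + intros [x [Hx Hp]]; exists x; auto.
    + intros [x [[Hx| ->] Hp]]; [exists x; auto|exists e; split; auto; apply Hle; auto].
Qed.

Lemma conf_CE_down (x : compESP sigma tau -> Prop) e e' : conf _ x -> x e -> leq e' e -> x e'.
Proof. intros (_&H&_); eauto. Qed.

Lemma isMap_comp : isMap (compMap sigma tau).
Proof.
  split; [intro e; reflexivity|].
  split.
  - intros x Hx. split; [|split].
    + apply finite_image. destruct Hx; auto.
    + intros b b' [v [Hv <-]] Hle. unfold compMap in *.
      destruct (vis_cases v) as [(s&a&Ht&Hs&Hi)|(c&t&Ht&Htc&Hi)]; rewrite Hi in Hle.
      * destruct (leq_inl_r (dual A) C b' a Hle) as [a' [-> Ha']].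
        pose proof (pb_in (ce_ev v)) as Hin; rewrite Ht in Hin.
        destruct (sb_downF _ _ _ _ _ (pb_bij (ce_ev v)) (inl s) (inl a) (inl a') (pb_sec _) Hin Ha') as [u' Hu'].
        pose proof (sb_match _ _ _ _ _ _ _ (pb_sec _) Hu') as Hm.
        destruct (m_inlA u' a' Hm) as [s' [-> Hs']].
        destruct (vis_below v _ Hu' (inl a')) as [d [Hd1 [Hd2 Hd3]]]; [simpl; rewrite Hs'; reflexivity|].
        exists d; split; auto. eapply conf_CE_down; eauto.
      * destruct (leq_inr_r (dual A) C b' c Hle) as [c' [-> Hc']].
        pose proof (pb_in (ce_ev v)) as Hin; rewrite Ht in Hin.
        destruct (sb_downE _ _ _ _ _ (pb_bij (ce_ev v)) (inr c) (inr t) (inr c') (pb_sec _) Hin Hc') as [w' Hw'].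
        pose proof (sb_match _ _ _ _ _ _ _ (pb_sec _) Hw') as Hm.
        destruct (m_inrC c' w' Hm) as [t' [-> Ht']].
        destruct (vis_below v _ Hw' (inr c')) as [d [Hd1 [Hd2 Hd3]]]; [reflexivity|].
        exists d; split; auto. eapply conf_CE_down; eauto.
    + assert (Hf : finite (image (compMap sigma tau) x)) by (apply finite_image; destruct Hx; auto).
      split; [apply (arena_con A HA)|apply (arena_con C HC)].
      * apply (finite_inj inl _ _ Hf); auto. intros x1 y1 _ _ H; inversion H; auto.
      * apply (finite_inj inr _ _ Hf); auto. intros x1 y1 _ _ H; inversion H; auto.
  - intros x Hx e e' He He' Heq. unfold compMap in Heq.
    destruct Hx as (_&_&Hc). apply con_CE in Hc. destruct Hc as [_ Hs].
    apply ce_eq. apply (ev_det_top SC AT _ fS gT (Ux x)); auto.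
    { intros p Hp; exists e; auto. }
    { intros p Hp; exists e'; auto. }
    assert (H1 : Ux x (pb_top (ce_ev e))) by (exists e; split; auto; apply pb_in).
    assert (H2 : Ux x (pb_top (ce_ev e'))) by (exists e'; split; auto; apply pb_in).
    destruct (vis_cases e) as [(s&a&Ht&Hs1&Hi)|(c&t&Ht&Htc&Hi)];
    destruct (vis_cases e') as [(s'&a'&Ht'&Hs1'&Hi')|(c'&t'&Ht'&Htc'&Hi')];
    rewrite Hi, Hi' in Heq; inversion Heq; subst; rewrite Ht, Ht' in *.
    + rewrite (sb_inj2 _ _ _ _ _ _ _ _ _ Hs H1 H2); auto.
    + rewrite (sb_inj1 _ _ _ _ _ _ _ _ _ Hs H1 H2); auto.
Qed.

Lemma lt_top (x y : CE) : (forall p, pb_bij (ce_ev x) p -> pb_bij (ce_ev y) p) -> x <> y ->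
  rtR (pb_bij (ce_ev y)) (pb_top (ce_ev x)) (pb_top (ce_ev y)) /\ pb_top (ce_ev x) <> pb_top (ce_ev y).
Proof.
  intros Hxy Hne. split.
  - apply pb_prime, Hxy, pb_in.
  - intro Ht. apply Hne, ce_eq. apply (ev_det_top SC AT _ fS gT (pb_bij (ce_ev y))); auto. apply pb_sec.
Qed.

Lemma courteous_comp : courteous (compMap sigma tau).
Proof.
  intros x y Himm Hpol. destruct Himm as [[Hxy Hne] Hnot]. simpl in Hxy.
  destruct (lt_top x y Hxy Hne) as [Hrt Htne].
  unfold compMap.
  destruct Hpol as [Hpx|Hpy].
  - destruct (vis_cases x) as [(s&a&Ht&Hs&Hi)|(c&t&Ht&Htc&Hi)].
    + assert (Hps : pol s = true).
      { rewrite <- (proj1 Hsmap s), Hs. simpl in Hpx. rewrite Hi in Hpx. exact Hpx. }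
      destruct (rt_first _ _ _ Hrt) as [Heq|[c [Hc1 Hc2]]]; [contradiction|].
      pose proof (Hxy _ (pb_in (ce_ev x))) as Hq. rewrite Ht in Hq, Hc1.
      destruct (posA_succ _ s a c (pb_sec _) Hq Hs Hps Hc1) as (s1&a1&Hq1&Hs1&Ha1&HR1&Hrt1).
      destruct (vis_below y _ Hq1 (inl a1)) as [z [Hz1 [Hz2 Hz3]]]; [simpl; rewrite Hs1; reflexivity|].
      assert (Hxz : forall p, pb_bij (ce_ev x) p -> pb_bij (ce_ev z) p).
      { apply (ev_le_top _ _ _ _ _ (pb_bij (ce_ev y))); auto; [apply pb_sec|].
        rewrite Ht, Hz2. apply rt_step; auto. }
      assert (Hnxz : x <> z).
      { intros <-. rewrite Ht in Hz2. apply (R_neq _ _ _ _ _ HR1); auto. }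
      destruct (classic (z = y)) as [<-|Hzy].
      * rewrite Hi, Hz1. apply (imm_inl (dual A) C); exact Ha1.
      * exfalso; apply Hnot. exists z; split; split; auto.
    + assert (Hpt : pol t = true).
      { rewrite <- (proj1 Htmap t), Htc. simpl in Hpx. rewrite Hi in Hpx. exact Hpx. }
      destruct (rt_first _ _ _ Hrt) as [Heq|[c0 [Hc1 Hc2]]]; [contradiction|].
      pose proof (Hxy _ (pb_in (ce_ev x))) as Hq. rewrite Ht in Hq, Hc1.
      destruct (posC_succ _ c t c0 (pb_sec _) Hq Htc Hpt Hc1) as (c1&t1&Hq1&Ht1&Hcc1&HR1&Hrt1).
      destruct (vis_below y _ Hq1 (inr c1)) as [z [Hz1 [Hz2 Hz3]]]; [reflexivity|].
      assert (Hxz : forall p, pb_bij (ce_ev x) p -> pb_bij (ce_ev z) p).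
      { apply (ev_le_top _ _ _ _ _ (pb_bij (ce_ev y))); auto; [apply pb_sec|].
        rewrite Ht, Hz2. apply rt_step; auto. }
      assert (Hnxz : x <> z).
      { intros <-. rewrite Ht in Hz2. apply (R_neq _ _ _ _ _ HR1); auto. }
      destruct (classic (z = y)) as [<-|Hzy].
      * rewrite Hi, Hz1. apply (imm_inr (dual A) C); exact Hcc1.
      * exfalso; apply Hnot. exists z; split; split; auto.
  - destruct (vis_cases y) as [(s&a&Ht&Hs&Hi)|(c&t&Ht&Htc&Hi)].
    + assert (Hps : pol s = false).
      { rewrite <- (proj1 Hsmap s), Hs. simpl in Hpy. rewrite Hi in Hpy. exact Hpy. }
      destruct (rt_split _ _ _ Hrt) as [Heq|[c [Hc1 Hc2]]]; [contradiction|].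
      pose proof (pb_in (ce_ev y)) as Hq. rewrite Ht in Hq, Hc2.
      destruct (negA_pred _ s a c (pb_sec _) Hq Hs Hps Hc2) as (s0&a0&Hq0&Hs0&Ha0&Hrt0&HR0).
      destruct (vis_below y _ Hq0 (inl a0)) as [z [Hz1 [Hz2 Hz3]]]; [simpl; rewrite Hs0; reflexivity|].
      assert (Hxz : forall p, pb_bij (ce_ev x) p -> pb_bij (ce_ev z) p).
      { apply (ev_le_top _ _ _ _ _ (pb_bij (ce_ev y))); auto; [apply pb_sec|].
        rewrite Hz2. eapply rt_trans; eauto. }
      assert (Hnzy : z <> y).
      { intros <-. rewrite Ht in Hz2. apply (R_neq _ _ _ _ _ HR0); auto. }
      destruct (classic (x = z)) as [<-|Hxz'].
      * rewrite Hi, Hz1. apply (imm_inl (dual A) C); exact Ha0.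
      * exfalso; apply Hnot. exists z; split; split; auto.
    + assert (Hpt : pol t = false).
      { rewrite <- (proj1 Htmap t), Htc. simpl in Hpy. rewrite Hi in Hpy. exact Hpy. }
      destruct (rt_split _ _ _ Hrt) as [Heq|[c0 [Hc1 Hc2]]]; [contradiction|].
      pose proof (pb_in (ce_ev y)) as Hq. rewrite Ht in Hq, Hc2.
      destruct (negC_pred _ c t c0 (pb_sec _) Hq Htc Hpt Hc2) as (c1&t1&Hq0&Ht0&Hcc&Hrt0&HR0).
      destruct (vis_below y _ Hq0 (inr c1)) as [z [Hz1 [Hz2 Hz3]]]; [reflexivity|].
      assert (Hxz : forall p, pb_bij (ce_ev x) p -> pb_bij (ce_ev z) p).
      { apply (ev_le_top _ _ _ _ _ (pb_bij (ce_ev y))); auto; [apply pb_sec|].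
        rewrite Hz2. eapply rt_trans; eauto. }
      assert (Hnzy : z <> y).
      { intros <-. rewrite Ht in Hz2. apply (R_neq _ _ _ _ _ HR0); auto. }
      destruct (classic (x = z)) as [<-|Hxz'].
      * rewrite Hi, Hz1. apply (imm_inr (dual A) C); exact Hcc.
      * exfalso; apply Hnot. exists z; split; split; auto.
Qed.

Definition IHc th q := forall y, clos_trans _ (Rl th) y q -> th y ->
  forall r1 r2, rtR th r1 y -> rtR th r2 y -> rtR th r1 r2 \/ rtR th r2 r1.

Lemma mixed_cmp th s t b s1 w1 u2 t2 : SB th -> th (inl s, inr t) -> sigma s = inr b -> tau t = inl b ->
  IHc th (inl s, inr t) ->
  th (inl s1, w1) -> ltE s1 s -> th (u2, inr t2) -> ltE t2 t ->
  rtR th (inl s1, w1) (u2, inr t2) \/ rtR th (u2, inr t2) (inl s1, w1).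
Proof.
  intros Hth Hq Hs Ht IH H1 Hs1 H2 Ht2.
  destruct (pol s) eqn:Hp.
  - assert (Hpt : pol t = false).
    { rewrite <- (proj1 Htmap t), Ht. rewrite <- (proj1 Hsmap s), Hs in Hp. simpl in *. rewrite Hp; reflexivity. }
    destruct (imm_below T HTes t2 t Ht2) as [t0 [Ht20 Ht0]].
    pose proof (Htcourt t0 t Ht0 (or_intror Hpt)) as Hc. rewrite Ht in Hc.
    destruct (imm_inl_r (dual B) C (tau t0) b Hc) as [b0 [Ht0b Hb0]].
    destruct (sb_downF _ _ _ _ _ th (inl s) (inr t) (inr t0) Hth Hq (proj1 (proj1 Ht0))) as [u0 Hu0].
    pose proof (sb_match _ _ _ _ _ th _ Hth Hu0) as Hm. simpl in Hm.
    destruct (m_inrTB u0 t0 b0 Hm Ht0b) as [s0 [-> Hs0]].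
    assert (Hs0s : leq s0 s).
    { apply (s_reflect th s (inr t) s0 (inr t0) Hth Hq Hu0). rewrite Hs0, Hs. apply Hb0. }
    destruct (HbS s s1 s0 (proj1 Hs1) Hs0s) as [Hl|Hl].
    + apply (IH (inl s0, inr t0)); auto.
      * apply t_step. split; [auto|split; [auto|right]]. apply ltE_inr; apply Ht0.
      * apply (cmpE _ _ _ _ _ th _ _ Hth); auto.
      * apply (cmpF _ _ _ _ _ th _ _ Hth); auto.
    + right. eapply rt_trans; [|apply (cmpE _ _ _ _ _ th _ _ Hth); [exact Hu0|exact H1|exact Hl]].
      apply (cmpF _ _ _ _ _ th _ _ Hth); auto.
  - destruct (imm_below S HSes s1 s Hs1) as [s0 [Hs10 Hs0]].
    pose proof (Hscourt s0 s Hs0 (or_intror Hp)) as Hc. rewrite Hs in Hc.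
    destruct (imm_inr_r (dual A) B (sigma s0) b Hc) as [b0 [Hs0b Hb0]].
    destruct (sb_downE _ _ _ _ _ th (inl s) (inr t) (inl s0) Hth Hq (proj1 (proj1 Hs0))) as [w0 Hw0].
    pose proof (sb_match _ _ _ _ _ th _ Hth Hw0) as Hm. simpl in Hm.
    destruct (m_inlSB s0 w0 b0 Hm Hs0b) as [t0 [-> Ht0]].
    assert (Ht0t : leq t0 t).
    { apply (t_reflect th t (inl s) t0 (inl s0) Hth Hq Hw0). rewrite Ht0, Ht. apply Hb0. }
    destruct (HbT t t2 t0 (proj1 Ht2) Ht0t) as [Hl|Hl].
    + apply (IH (inl s0, inr t0)); auto.
      * apply t_step. split; [auto|split; [auto|left]]. apply ltE_inl; apply Hs0.
      * apply (cmpE _ _ _ _ _ th _ _ Hth); auto.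
      * apply (cmpF _ _ _ _ _ th _ _ Hth); auto.
    + left. eapply rt_trans; [|apply (cmpF _ _ _ _ _ th _ _ Hth); [exact Hw0|exact H2|exact Hl]].
      apply (cmpE _ _ _ _ _ th _ _ Hth); auto.
Qed.

Lemma predA th s a c : SB th -> th (inl s, inl a) -> sigma s = inl a -> Rl th c (inl s, inl a) ->
  exists s1 w1, c = (inl s1, w1) /\ ltE s1 s.
Proof.
  intros Hth Hq Hs (Hc&_&[Hl|Hl]); destruct c as [u w]; simpl in Hl.
  - destruct (ltE_inl_r S C u s Hl) as [s1 [-> Hs1]]; eauto.
  - destruct (ltE_inl_r A T w a Hl) as [a1 [-> Ha1]].
    pose proof (sb_match _ _ _ _ _ th _ Hth Hc) as Hm. simpl in Hm.
    destruct (m_inlA u a1 Hm) as [s1 [-> Hs1]].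
    exists s1, (inl a1); split; auto.
    split. { apply (s_reflect th s (inl a) s1 (inl a1) Hth Hq Hc). rewrite Hs1, Hs. apply Ha1. }
    intros ->. apply (proj2 Ha1). pose proof (sb_inj1 _ _ _ _ _ th _ _ _ Hth Hc Hq) as E. inversion E; auto.
Qed.

Lemma predC th c t x : SB th -> th (inr c, inr t) -> tau t = inr c -> Rl th x (inr c, inr t) ->
  exists u1 t1, x = (u1, inr t1) /\ ltE t1 t.
Proof.
  intros Hth Hq Ht (Hc&_&[Hl|Hl]); destruct x as [u w]; simpl in Hl.
  - destruct (ltE_inr_r S C u c Hl) as [c1 [-> Hc1]].
    pose proof (sb_match _ _ _ _ _ th _ Hth Hc) as Hm. simpl in Hm.
    destruct (m_inrC c1 w Hm) as [t1 [-> Ht1]].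
    exists (inr c1), t1; split; auto.
    split. { apply (t_reflect th t (inr c) t1 (inr c1) Hth Hq Hc). rewrite Ht1, Ht. apply Hc1. }
    intros ->. apply (proj2 Hc1). pose proof (sb_inj2 _ _ _ _ _ th _ _ _ Hth Hc Hq) as E. inversion E; auto.
  - destruct (ltE_inr_r A T w t Hl) as [t1 [-> Ht1]]; eauto.
Qed.

Lemma direct_cmp th q : SB th -> th q -> IHc th q ->
  forall c1 c2, Rl th c1 q -> Rl th c2 q -> rtR th c1 c2 \/ rtR th c2 c1.
Proof.
  intros Hth Hq IH c1 c2 H1 H2.
  assert (Hc1 : th c1) by (destruct H1; auto). assert (Hc2 : th c2) by (destruct H2; auto).
  pose proof (sb_match _ _ _ _ _ th _ Hth Hq) as Hm.
  destruct (pair_cases q Hm) as [(s&a&->&Hs)|[(s&t&b&->&Hs&Ht)|(c&t&->&Ht)]].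
  - destruct (predA th s a c1 Hth Hq Hs H1) as (s1&w1&->&Hs1).
    destruct (predA th s a c2 Hth Hq Hs H2) as (s2&w2&->&Hs2).
    destruct (HbS s s1 s2 (proj1 Hs1) (proj1 Hs2)); [left|right]; apply (cmpE _ _ _ _ _ th _ _ Hth); auto.
  - destruct H1 as (_&_&[Hl1|Hl1]); destruct H2 as (_&_&[Hl2|Hl2]); destruct c1 as [u1 w1], c2 as [u2 w2]; cbn [fst snd] in Hl1, Hl2.
    + destruct (ltE_inl_r S C u1 s Hl1) as [s1 [-> Hs1]]. destruct (ltE_inl_r S C u2 s Hl2) as [s2 [-> Hs2]].
      destruct (HbS s s1 s2 (proj1 Hs1) (proj1 Hs2)); [left|right]; apply (cmpE _ _ _ _ _ th _ _ Hth); auto.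
    + destruct (ltE_inl_r S C u1 s Hl1) as [s1 [-> Hs1]]. destruct (ltE_inr_r A T w2 t Hl2) as [t2 [-> Ht2]].
      eapply mixed_cmp; eauto.
    + destruct (ltE_inr_r A T w1 t Hl1) as [t1 [-> Ht1]]. destruct (ltE_inl_r S C u2 s Hl2) as [s2 [-> Hs2]].
      destruct (mixed_cmp th s t b s2 w2 u1 t1 Hth Hq Hs Ht IH Hc2 Hs2 Hc1 Ht1); auto.
    + destruct (ltE_inr_r A T w1 t Hl1) as [t1 [-> Ht1]]. destruct (ltE_inr_r A T w2 t Hl2) as [t2 [-> Ht2]].
      destruct (HbT t t1 t2 (proj1 Ht1) (proj1 Ht2)); [left|right]; apply (cmpF _ _ _ _ _ th _ _ Hth); auto.
  - destruct (predC th c t c1 Hth Hq Ht H1) as (u1&t1&->&Ht1).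
    destruct (predC th c t c2 Hth Hq Ht H2) as (u2&t2&->&Ht2).
    destruct (HbT t t1 t2 (proj1 Ht1) (proj1 Ht2)); [left|right]; apply (cmpF _ _ _ _ _ th _ _ Hth); auto.
Qed.

Lemma chain th : SB th -> forall q, th q ->
  forall r1 r2, rtR th r1 q -> rtR th r2 q -> rtR th r1 r2 \/ rtR th r2 r1.
Proof.
  intros Hth.
  assert (Hwf : well_founded (clos_trans _ (Rl th))).
  { destruct (sb_fin _ _ _ _ _ th Hth) as [l Hl].
    apply (wf_finite _ l); [intros x y (Hx&_); auto|intro x; apply (sb_acyc _ _ _ _ _ th x Hth)]. }
  intro q; induction q as [q IH] using (well_founded_ind Hwf).
  intros Hq r1 r2 H1 H2.
  destruct (rt_split _ _ _ H1) as [<-|[c1 [H1a H1b]]]; [right; auto|].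
  destruct (rt_split _ _ _ H2) as [<-|[c2 [H2a H2b]]]; [left; auto|].
  assert (IH' : IHc th q) by (intros y Hy Hth' r r' Hr Hr'; apply (IH y Hy Hth'); auto).
  destruct (direct_cmp th q Hth Hq IH' c1 c2 H1b H2b) as [D|D].
  - apply (IH c2 (t_step _ _ _ _ H2b)); [destruct H2b; auto| |auto]. eapply rt_trans; eauto.
  - apply (IH c1 (t_step _ _ _ _ H1b)); [destruct H1b; auto|auto|]. eapply rt_trans; eauto.
Qed.

Lemma backSeq_comp : backSeq (compESP sigma tau).
Proof.
  intros x x1 x2 H1 H2. simpl in H1, H2.
  destruct (chain (pb_bij (ce_ev x)) (pb_sec _) (pb_top (ce_ev x)) (pb_in _) (pb_top (ce_ev x1)) (pb_top (ce_ev x2)))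
    as [D|D].
  - apply pb_prime, H1, pb_in.
  - apply pb_prime, H2, pb_in.
  - left. simpl. apply (ev_le_top _ _ _ _ _ (pb_bij (ce_ev x))); auto. apply pb_sec.
  - right. simpl. apply (ev_le_top _ _ _ _ _ (pb_bij (ce_ev x))); auto. apply pb_sec.
Qed.

Lemma conf_ext (E : esp) (P Q : E -> Prop) : (forall e, P e <-> Q e) -> conf E P -> conf E Q.
Proof. intros H; rewrite (pred_ext P Q H); auto. Qed.

Lemma conf_CE_con (x : compESP sigma tau -> Prop) : conf _ x -> SB (Ux x).
Proof. intros (_&_&H). apply con_CE in H. tauto. Qed.

Lemma vis_in_x (x : compESP sigma tau -> Prop) q i : conf _ x -> Ux x q -> hideB A B C (fS (fst q)) = Some i ->
  image (compMap sigma tau) x i.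
Proof.
  intros Hx [e [He Hq]] Hv. destruct (vis_below e q Hq i Hv) as [d [Hd1 [Hd2 Hd3]]].
  exists d; split; auto. eapply conf_CE_down; eauto.
Qed.

Lemma ext_conf (x : compESP sigma tau -> Prop) n (s : CE) :
  conf _ x -> SB (addP _ _ (Ux x) n) -> (forall r, ~ Rl (addP _ _ (Ux x) n) n r) ->
  (forall p, pb_bij (ce_ev s) p -> addP _ _ (Ux x) n p) -> pb_top (ce_ev s) = n ->
  conf (compESP sigma tau) (fun e => x e \/ e = s).
Proof.
  intros Hx Hs Hmax Hsub Htop.
  pose proof (conf_CE_con x Hx) as HU.
  split; [apply finite_add; destruct Hx; auto|split].
  - intros e e' [He| ->] Hle; [left; eapply conf_CE_down; eauto|].
    simpl in Hle.
    destruct (classic (pb_top (ce_ev e') = n)) as [Hn|Hn].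
    + right. apply ce_eq. apply (ev_det_top SC AT _ fS gT (addP _ _ (Ux x) n)); auto. congruence.
    + left. destruct (Hsub _ (Hle _ (pb_in (ce_ev e')))) as [[e0 [He0 Hp0]]|Habs]; [|contradiction].
      eapply conf_CE_down; [exact Hx|exact He0|]. simpl. intros p Hp.
      apply (below_in SC AT _ fS gT (Ux x) (pb_bij (ce_ev e0)) p (pb_top (ce_ev e'))); auto.
      * apply pb_sec.
      * intros p' Hp'; exists e0; auto.
      * apply (rt_remove_max _ _ _ n); auto.
        eapply rt_mono; [|apply pb_prime; exact Hp]. intros r Hr; apply Hsub, Hle, Hr.
  - apply con_CE. split; [apply finite_add; destruct Hx; auto|].
    apply (sb_ext (addP _ _ (Ux x) n)); auto.
    intro p; split.
    + intros [Hp| ->]; [destruct Hp as [e [He Hp]]; exists e; auto|exists s; split; auto; rewrite <- Htop; apply pb_in].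
    + intros [e [[He| ->] Hp]]; [left; exists e; auto|auto].
Qed.

Lemma sub_prev (x : compESP sigma tau -> Prop) (s' : CE) :
  conf _ (fun e => x e \/ e = s') ->
  (forall r, Rl (pb_bij (ce_ev s')) r (pb_top (ce_ev s')) -> exists q0 i, pb_bij (ce_ev s') q0 /\
       hideB A B C (fS (fst q0)) = Some i /\ rtR (pb_bij (ce_ev s')) r q0 /\
       Rl (pb_bij (ce_ev s')) q0 (pb_top (ce_ev s'))) ->
  forall p, pb_bij (ce_ev s') p -> addP _ _ (Ux x) (pb_top (ce_ev s')) p.
Proof.
  intros Hx Hpred p Hp.
  destruct (rt_split _ _ _ (pb_prime _ p Hp)) as [->|[c [Hc1 Hc2]]]; [right; auto|].
  destruct (Hpred c Hc2) as (q0&i&Hq0&Hv&Hrt&HR).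
  destruct (vis_below s' q0 Hq0 i Hv) as [z [Hz1 [Hz2 Hz3]]].
  assert (Hzx : x z \/ z = s') by exact (conf_CE_down (fun e => x e \/ e = s') s' z Hx (or_intror eq_refl) Hz3).
  destruct Hzx as [Hzx| ->].
  - left. exists z; split; auto.
    apply (ev_below SC AT _ fS gT (pb_bij (ce_ev s'))); auto; [apply pb_sec|]. rewrite Hz2; eapply rt_trans; eauto.
  - exfalso. rewrite Hz2 in HR. apply (R_neq _ _ _ _ _ HR); auto.
Qed.

Lemma receptA (x : compESP sigma tau -> Prop) (a : A) : conf _ x ->
  @pol (par (dual A) C) (inl a) = false -> ~ image (compMap sigma tau) x (inl a) ->
  conf (par (dual A) C) (fun b => image (compMap sigma tau) x b \/ b = inl a) ->
  exists s, (conf _ (fun e => x e \/ e = s) /\ compMap sigma tau s = inl a) /\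
    forall s', conf _ (fun e => x e \/ e = s') -> compMap sigma tau s' = inl a -> s' = s.
Proof.
  intros Hx Hpol Hni Hcf.
  pose proof (conf_CE_con x Hx) as HTh.
  pose proof (xS_conf (Ux x) HTh) as HxS.
  assert (Hn1 : ~ image sigma (fun s => exists w, Ux x (inl s, w)) (inl a)).
  { intros [s0 [[w Hw] Hs0]]. apply Hni.
    pose proof (sb_match _ _ _ _ _ _ _ HTh Hw) as Hm.
    rewrite (m_inlS s0 w a Hm Hs0) in Hw. apply (vis_in_x x _ (inl a) Hx Hw). simpl. rewrite Hs0. reflexivity. }
  assert (Hvis : forall a', a' <> a -> leq a' a -> exists s', sigma s' = inl a' /\ Ux x (inl s', inl a')).
  { intros a' Hne Hle.
    destruct (proj1 (proj2 Hcf) (inl a) (inl a') (or_intror eq_refl) Hle) as [[d [Hd Himg]]|Heq];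
      [|exfalso; apply Hne; injection Heq; auto].
    unfold compMap in Himg.
    destruct (vis_cases d) as [(s2&a2&Ht2&Hs2&Hi2)|(c2&t2&Ht2&Htc2&Hi2)]; rewrite Hi2 in Himg; [|discriminate].
    injection Himg; intros ->. exists s2; split; auto. exists d; split; auto. rewrite <- Ht2; apply pb_in. }
  assert (Hcf2 : conf (par (dual A) B) (fun b => image sigma (fun s => exists w, Ux x (inl s, w)) b \/ b = inl a)).
  { pose proof (proj1 (proj2 Hsmap) _ HxS) as Hmi.
    assert (Hf : finite (fun b => image sigma (fun s => exists w, Ux x (inl s, w)) b \/ b = inl a))
      by (apply finite_add; destruct Hmi; auto).
    split; [exact Hf|split].
    - intros b b' [Hb| ->] Hle; [left; exact (proj1 (proj2 Hmi) b b' Hb Hle)|].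
      destruct (leq_inl_r (dual A) B b' a Hle) as [a' [-> Ha']].
      destruct (classic (a' = a)) as [->|Hne]; [right; reflexivity|left].
      destruct (Hvis a' Hne Ha') as [s' [Hs' Hu]]. exists s'; split; auto. exists (inl a'); auto.
    - split; [apply (arena_con A HA)|apply (arena_con B HB)].
      + apply (finite_inj inl _ _ Hf); auto. intros x1 y1 _ _ H; inversion H; auto.
      + apply (finite_inj inr _ _ Hf); auto. intros x1 y1 _ _ H; inversion H; auto. }
  destruct (Hsrec _ HxS (inl a) Hpol Hn1 Hcf2) as [sn [[Hcn Hsn] Huniq]].
  assert (HnE : ~ exists w, Ux x (inl sn, w)).
  { intros [w Hw]; apply Hn1; exists sn; split; [exists w; auto|auto]. }
  assert (HnF : ~ exists u, Ux x (u, inl a)).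
  { intros [u Hu]. apply Hni. pose proof (sb_match _ _ _ _ _ _ _ HTh Hu) as Hm.
    destruct (m_inlA u a Hm) as [s0 [-> Hs0]]. apply (vis_in_x x _ (inl a) Hx Hu). simpl. rewrite Hs0. reflexivity. }
  assert (Hmatch : fS (inl sn) = gT (inl a)) by (simpl; rewrite Hsn; reflexivity).
  assert (HcE : conf SC (fun u => (exists w, Ux x (u, w)) \/ u = inl sn)).
  { apply conf_par_mk.
    - apply (conf_ext S (fun s => (exists w, Ux x (inl s, w)) \/ s = sn)); [|exact Hcn].
      intro e; split; intros [H| H]; auto; right; [rewrite H|injection H]; auto.
    - apply (conf_ext C (fun c => exists w, Ux x (inr c, w))).
      + intro e; split; [auto|intros [H|H]; [auto|discriminate]].
      + apply (conf_par_r S C (fun u => exists w, Ux x (u, w))). eapply sb_confE; eauto. }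
  assert (HcF : conf AT (fun w => (exists u, Ux x (u, w)) \/ w = inl a)).
  { apply conf_par_mk.
    - pose proof (conf_par_l A T (fun w => exists u, Ux x (u, w)) (sb_confF _ _ _ _ _ _ HTh)) as LA.
      apply (conf_ext A (fun a' => (exists u, Ux x (u, inl a')) \/ a' = a)).
      { intro e; split; intros [H| H]; auto; right; [rewrite H|injection H]; auto. }
      assert (Hf : finite (fun a' => (exists u, Ux x (u, inl a')) \/ a' = a)) by (apply finite_add; destruct LA; auto).
      split; [exact Hf|split; [|apply (arena_con A HA); exact Hf]].
      intros a1 a2 [H| ->] Hle; [left; exact (proj1 (proj2 LA) a1 a2 H Hle)|].
      destruct (classic (a2 = a)) as [->|Hne]; [right; reflexivity|left].
      destruct (Hvis a2 Hne Hle) as [s' [_ Hu]]; eauto.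
    - apply (conf_ext T (fun t => exists u, Ux x (u, inr t))).
      + intro e; split; [auto|intros [H|H]; [auto|discriminate]].
      + apply (conf_par_r A T (fun w => exists u, Ux x (u, w))). eapply sb_confF; eauto. }
  pose proof (sb_extend SC AT _ fS gT (Ux x) (inl sn) (inl a) HTh Hmatch HcE HcF HnE HnF) as HTh'.
  pose proof (addP_max SC AT _ fS gT (Ux x) (inl sn) (inl a) HTh HnE HnF) as Hmax.
  assert (Hv : hideB A B C (fS (fst (pb_top (primeOf SC AT _ fS gT cSC cAT _ (inl sn, inl a) HTh' (or_intror eq_refl)))))
               = Some (inl a)).
  { change (hideB A B C (fS (inl sn)) = Some (inl a)); simpl; rewrite Hsn; reflexivity. }
  exists (@CompEv A B C S T sigma tau _ (inl a) Hv).
  split; [split|].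
  - apply (ext_conf x (inl sn, inl a)); auto.
    all: try (intros p Hp; exact (primeOf_sub _ _ _ _ _ _ _ _ _ _ _ _ Hp)).
  - reflexivity.
  - intros s' Hx' Hs'.
    unfold compMap in Hs'.
    destruct (vis_cases s') as [(s2&a2&Ht2&Hs2&Hi2)|(c2&t2&Ht2&Htc2&Hi2)]; rewrite Hi2 in Hs'; [|discriminate].
    injection Hs'; intros ->.
    assert (Hp2 : pol s2 = false) by (rewrite <- (proj1 Hsmap s2), Hs2; exact Hpol).
    assert (Hq : pb_bij (ce_ev s') (inl s2, inl a)) by (rewrite <- Ht2; apply pb_in).
    assert (Hsub' := sub_prev x s' Hx').
    assert (Hsub : forall p, pb_bij (ce_ev s') p -> addP SC AT (Ux x) (inl s2, inl a) p).
    { intros p Hp. rewrite <- Ht2. apply Hsub'; auto. intros r Hr. rewrite Ht2 in Hr |- *.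
      destruct (negA_pred _ s2 a r (pb_sec _) Hq Hs2 Hp2 Hr) as (s0&a0&Hq0&Hs0&Ha0&Hrt&HR).
      exists (inl s0, inl a0), (inl a0). split; auto. split; [simpl; rewrite Hs0; reflexivity|]. split; auto. }
    pose proof (conf_CE_con _ Hx') as HTh''.
    assert (Hc2 : conf S (fun s => (exists w, Ux x (inl s, w)) \/ s = s2)).
    { apply (conf_ext S (fun s => exists w, Ux (fun e => x e \/ e = s') (inl s, w))); [|apply xS_conf; auto].
      intro e; split.
      - intros [w [e0 [[He0| ->] Hp]]]; [left; exists w, e0; auto|].
        destruct (Hsub _ Hp) as [H|H]; [left; exists w; auto|right; injection H; auto].
      - intros [[w [e0 [He0 Hp]]]| ->]; [exists w, e0; auto|exists (inl a), s'; auto]. }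
    pose proof (Huniq s2 Hc2 Hs2) as ->.
    apply ce_eq. apply (ev_det_top SC AT _ fS gT (addP SC AT (Ux x) (inl sn, inl a))); auto.
    all: try (intros p Hp; exact (primeOf_sub _ _ _ _ _ _ _ _ _ _ _ _ Hp)).
    all: try (rewrite Ht2; reflexivity).
Qed.

Lemma receptC (x : compESP sigma tau -> Prop) (c : C) : conf _ x ->
  @pol (par (dual A) C) (inr c) = false -> ~ image (compMap sigma tau) x (inr c) ->
  conf (par (dual A) C) (fun b => image (compMap sigma tau) x b \/ b = inr c) ->
  exists s, (conf _ (fun e => x e \/ e = s) /\ compMap sigma tau s = inr c) /\
    forall s', conf _ (fun e => x e \/ e = s') -> compMap sigma tau s' = inr c -> s' = s.
Proof.
  intros Hx Hpol Hni Hcf.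
  pose proof (conf_CE_con x Hx) as HTh.
  pose proof (xT_conf (Ux x) HTh) as HxT.
  assert (Hn1 : ~ image tau (fun t => exists u, Ux x (u, inr t)) (inr c)).
  { intros [t0 [[u Hu] Ht0]]. apply Hni.
    pose proof (sb_match _ _ _ _ _ _ _ HTh Hu) as Hm.
    rewrite (m_inrT u t0 c Hm Ht0) in Hu. apply (vis_in_x x _ (inr c) Hx Hu). reflexivity. }
  assert (Hvis : forall c', c' <> c -> leq c' c -> exists t', tau t' = inr c' /\ Ux x (inr c', inr t')).
  { intros c' Hne Hle.
    destruct (proj1 (proj2 Hcf) (inr c) (inr c') (or_intror eq_refl) Hle) as [[d [Hd Himg]]|Heq];
      [|exfalso; apply Hne; injection Heq; auto].
    unfold compMap in Himg.
    destruct (vis_cases d) as [(s2&a2&Ht2&Hs2&Hi2)|(c2&t2&Ht2&Htc2&Hi2)]; rewrite Hi2 in Himg; [discriminate|].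
    injection Himg; intros ->. exists t2; split; auto. exists d; split; auto. rewrite <- Ht2; apply pb_in. }
  assert (Hcf2 : conf (par (dual B) C) (fun b => image tau (fun t => exists u, Ux x (u, inr t)) b \/ b = inr c)).
  { pose proof (proj1 (proj2 Htmap) _ HxT) as Hmi.
    assert (Hf : finite (fun b => image tau (fun t => exists u, Ux x (u, inr t)) b \/ b = inr c))
      by (apply finite_add; destruct Hmi; auto).
    split; [exact Hf|split].
    - intros b b' [Hb| ->] Hle; [left; exact (proj1 (proj2 Hmi) b b' Hb Hle)|].
      destruct (leq_inr_r (dual B) C b' c Hle) as [c' [-> Hc']].
      destruct (classic (c' = c)) as [->|Hne]; [right; reflexivity|left].
      destruct (Hvis c' Hne Hc') as [t' [Ht' Hu]]. exists t'; split; auto. exists (inr c'); auto.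
    - split; [apply (arena_con B HB)|apply (arena_con C HC)].
      + apply (finite_inj inl _ _ Hf); auto. intros x1 y1 _ _ H; inversion H; auto.
      + apply (finite_inj inr _ _ Hf); auto. intros x1 y1 _ _ H; inversion H; auto. }
  destruct (Htrec _ HxT (inr c) Hpol Hn1 Hcf2) as [tn [[Hcn Htn] Huniq]].
  assert (HnF : ~ exists u, Ux x (u, inr tn)).
  { intros [u Hu]; apply Hn1; exists tn; split; [exists u; auto|auto]. }
  assert (HnE : ~ exists w, Ux x (inr c, w)).
  { intros [w Hw]. apply Hni. pose proof (sb_match _ _ _ _ _ _ _ HTh Hw) as Hm.
    destruct (m_inrC c w Hm) as [t0 [-> Ht0]]. apply (vis_in_x x _ (inr c) Hx Hw). reflexivity. }
  assert (Hmatch : fS (inr c) = gT (inr tn)) by (simpl; rewrite Htn; reflexivity).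
  assert (HcE : conf SC (fun u => (exists w, Ux x (u, w)) \/ u = inr c)).
  { apply conf_par_mk.
    - apply (conf_ext S (fun s => exists w, Ux x (inl s, w))).
      + intro e; split; [auto|intros [H|H]; [auto|discriminate]].
      + apply (conf_par_l S C (fun u => exists w, Ux x (u, w))). eapply sb_confE; eauto.
    - pose proof (conf_par_r S C (fun u => exists w, Ux x (u, w)) (sb_confE _ _ _ _ _ _ HTh)) as LC.
      apply (conf_ext C (fun c' => (exists w, Ux x (inr c', w)) \/ c' = c)).
      { intro e; split; intros [H| H]; auto; right; [rewrite H|injection H]; auto. }
      assert (Hf : finite (fun c' => (exists w, Ux x (inr c', w)) \/ c' = c)) by (apply finite_add; destruct LC; auto).
      split; [exact Hf|split; [|apply (arena_con C HC); exact Hf]].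
      intros c1 c2 [H| ->] Hle; [left; exact (proj1 (proj2 LC) c1 c2 H Hle)|].
      destruct (classic (c2 = c)) as [->|Hne]; [right; reflexivity|left].
      destruct (Hvis c2 Hne Hle) as [t' [_ Hu]]; eauto. }
  assert (HcF : conf AT (fun w => (exists u, Ux x (u, w)) \/ w = inr tn)).
  { apply conf_par_mk.
    - apply (conf_ext A (fun a' => exists u, Ux x (u, inl a'))).
      + intro e; split; [auto|intros [H|H]; [auto|discriminate]].
      + apply (conf_par_l A T (fun w => exists u, Ux x (u, w))). eapply sb_confF; eauto.
    - apply (conf_ext T (fun t => (exists u, Ux x (u, inr t)) \/ t = tn)); [|exact Hcn].
      intro e; split; intros [H| H]; auto; right; [rewrite H|injection H]; auto. }
  pose proof (sb_extend SC AT _ fS gT (Ux x) (inr c) (inr tn) HTh Hmatch HcE HcF HnE HnF) as HTh'.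
  pose proof (addP_max SC AT _ fS gT (Ux x) (inr c) (inr tn) HTh HnE HnF) as Hmax.
  assert (Hv : hideB A B C (fS (fst (pb_top (primeOf SC AT _ fS gT cSC cAT _ (inr c, inr tn) HTh' (or_intror eq_refl)))))
               = Some (inr c)).
  { change (hideB A B C (fS (inr c)) = Some (inr c)); reflexivity. }
  exists (@CompEv A B C S T sigma tau _ (inr c) Hv).
  split; [split|].
  - apply (ext_conf x (inr c, inr tn)); auto.
    all: try (intros p Hp; exact (primeOf_sub _ _ _ _ _ _ _ _ _ _ _ _ Hp)).
  - reflexivity.
  - intros s' Hx' Hs'.
    unfold compMap in Hs'.
    destruct (vis_cases s') as [(s2&a2&Ht2&Hs2&Hi2)|(c2&t2&Ht2&Htc2&Hi2)]; rewrite Hi2 in Hs'; [discriminate|].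
    injection Hs'; intros ->.
    assert (Hp2 : pol t2 = false) by (rewrite <- (proj1 Htmap t2), Htc2; exact Hpol).
    assert (Hq : pb_bij (ce_ev s') (inr c, inr t2)) by (rewrite <- Ht2; apply pb_in).
    assert (Hsub' := sub_prev x s' Hx').
    assert (Hsub : forall p, pb_bij (ce_ev s') p -> addP SC AT (Ux x) (inr c, inr t2) p).
    { intros p Hp. rewrite <- Ht2. apply Hsub'; auto. intros r Hr. rewrite Ht2 in Hr |- *.
      destruct (negC_pred _ c t2 r (pb_sec _) Hq Htc2 Hp2 Hr) as (c0&t0&Hq0&Ht0&Hc0&Hrt&HR).
      exists (inr c0, inr t0), (inr c0). split; [auto|]. split; [reflexivity|]. split; auto. }
    pose proof (conf_CE_con _ Hx') as HTh''.
    assert (Hc2 : conf T (fun t => (exists u, Ux x (u, inr t)) \/ t = t2)).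
    { apply (conf_ext T (fun t => exists u, Ux (fun e => x e \/ e = s') (u, inr t))); [|apply xT_conf; auto].
      intro e; split.
      - intros [u [e0 [[He0| ->] Hp]]]; [left; exists u, e0; auto|].
        destruct (Hsub _ Hp) as [H|H]; [left; exists u; auto|right; inversion H; auto].
      - intros [[u [e0 [He0 Hp]]]| ->]; [exists u, e0; auto|exists (inr c), s'; auto]. }
    pose proof (Huniq t2 Hc2 Htc2) as ->.
    apply ce_eq. apply (ev_det_top SC AT _ fS gT (addP SC AT (Ux x) (inr c, inr tn))); auto.
    all: try (intros p Hp; exact (primeOf_sub _ _ _ _ _ _ _ _ _ _ _ _ Hp)).
    all: try (rewrite Ht2; reflexivity).
Qed.

Lemma receptive_comp : receptive (compMap sigma tau).
Proof.
  intros x Hx [a|c] Hpol Hni Hcf.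
  - apply receptA; auto.
  - apply receptC; auto.
Qed.

Lemma comp_strategy : isStrategy (compMap sigma tau) /\ backSeq (compESP sigma tau).
Proof.
  split; [|apply backSeq_comp].
  split; [apply isES_comp|]. split; [apply isES_arena_par; auto|].
  split; [apply isMap_comp|]. split; [apply courteous_comp|apply receptive_comp].
Qed.

End Comp.


Theorem mainTheorem6 (A B C S T : esp)
  (sigma : S -> par (dual A) B) (tau : T -> par (dual B) C) :
  isArena A -> isArena B -> isArena C ->
  isStrategy sigma -> backSeq S ->
  isStrategy tau -> backSeq T ->
  isStrategy (compMap sigma tau) /\ backSeq (compESP sigma tau).
Proof.
  intros HA HB HC Hs HbS Ht HbT. exact (comp_strategy A B C S T sigma tau HA HB HC Hs HbS Ht HbT).
Qed.
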